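(* The category $\mathbb S^{\mathbb P}_r$, with sum $\oplus$, unit $0$, symmetries $\sigma$ and trace operator $\mathrm{tr}$, is a traced symmetric monoidal category.
   Context: Notation: $[k]=\{1,\dots,k\}$ ($[0]=\emptyset$); $T(X)=X+\mathbb R\times X+\{\exists^*,\forall^*\}$ (disjoint union); composition in diagrammatic order. $\mathbb S^{\mathbb P}_r$ has natural numbers as objects; an arrow $f:m\to n$ is a function $f:[m]\to T([n])$ satisfying realizability: if $f(i)=k\in[n]$ then for every $j\in[m]\setminus\{i\}$, $f(j)\ne k$ and $f(j)\ne(r,k)$ for all $r\in\mathbb R$. Composition of $f:m\to l$ and $g:l\to n$: $(f;g)(i)=f(i)$ if $f(i)\in\{\exists^*,\forall^*\}$; $=g(j)$ if $f(i)=j\in[l]$; $=g(j)$ if $f(i)=(r,j)$ and $g(j)\in\{\exists^*,\forall^*\}$; $=(r,k)$ if $f(i)=(r,j)$ and $g(j)=k\in[n]$; $=(r+r',k)$ if $f(i)=(r,j)$ and $g(j)=(r',k)$. Identity $\mathrm{id}_m(i)=i$. Symmetry $\sigma_{m,n}:m+n\to n+m$, $\sigma_{m,n}(i)=n+i$ for $i\le m$, $\sigma_{m,n}(m+j)=j$. Sum of $f:m\to n$ and $g:k\to l$: $(f\oplus g)(i)=f(i)$ for $i\in[m]$, and $(f\oplus g)(m+i)$ is $g(i)$ with its element $j\in[l]$ (if any) replaced by $n+j$. Trace of $f:l+m\to l+n$: for $i\in[m]$ define a sequence $v$ by $v_0=l+i$ and: if $j=0$ or $v_j\in[l]$ then $v_{j+1}=f(v_j)$;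 if $v_j=(r,k)$ with $k\in[l]$ then $v_{j+1}=f(k)$; otherwise ($j\ge1$ and $v_j\in\{l+1,..,l+n\}\cup\mathbb R\times\{l+1,..,l+n\}\cup\{\exists^*,\forall^*\}$) the sequence stops. If $v=(v_0,\dots,v_K)$ is finite, let $S$ be the sum of the first components of all $v_j\in\mathbb R\times[l+n]$, $1\le j\le K$; then $\mathrm{tr}^l_{m,n}(f)(i)=v_K$ if $v_K\in\{\exists^*,\forall^*\}$; $=k$ if $v_K=l+k$ and $v_j\in[l]$ for all $1\le j<K$; $=(S,k)$ if $v_K=l+k$ and some $v_j$, $1\le j<K$, lies in $\mathbb R\times[l]$; $=(S,k)$ if $v_K=(r,l+k)$. If $v$ is infinite, let $w'_1,w'_2,\dots$ be the first components, in order, of the (infinitely many) entries of $v$ lying in $\mathbb R\times[l]$; then $\mathrm{tr}^l_{m,n}(f)(i)=\exists^*$ if $\liminf_{N\to\infty}\frac1N\sum_{t=1}^Nw'_t\ge0$, and $\forall^*$ otherwise. *)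

(* Defs.v *)
From Stdlib Require Import Reals Arith List ClassicalEpsilon.
From Coquelicot Require Import Coquelicot.
Open Scope R_scope.

(* Conventions: everything is 0-based.  The object n stands for the finite set
   {0,..,n-1} (the paper's [n] = {1,..,n}, shifted by one).  An arrow f : m -> n
   is represented by a function  f : nat -> Tt nat  of which only the values on
   i < m matter; [Arr m n f] says these values are in T({0..n-1}) and that f is
   realizable.  Equality of arrows m -> n is [eqA m] (pointwise on {0..m-1}). *)

(* T(X) = X + R x X + {exists*, forall*} *)
Inductive Tt (X : Type) : Type :=
| Pt : X -> Tt X
| Wt : R -> X -> Tt X
| Ex : Tt X
| Fa : Tt X.
Arguments Pt {X} _.
Arguments Wt {X} _ _.
Arguments Ex {X}.
Arguments Fa {X}.

Definition labels_lt (n : nat) (v : Tt nat) : Prop :=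
  match v with Pt k => (k < n)%nat | Wt _ k => (k < n)%nat | _ => True end.

Definition realizable (m : nat) (f : nat -> Tt nat) : Prop :=
  forall i k, (i < m)%nat -> f i = Pt k ->
    forall j, (j < m)%nat -> j <> i -> f j <> Pt k /\ (forall r, f j <> Wt r k).

Definition Arr (m n : nat) (f : nat -> Tt nat) : Prop :=
  (forall i, (i < m)%nat -> labels_lt n (f i)) /\ realizable m f.

Definition eqA (m : nat) (f g : nat -> Tt nat) : Prop :=
  forall i, (i < m)%nat -> f i = g i.

Definition idA : nat -> Tt nat := fun i => Pt i.

(* composition f ; g (diagrammatic order) *)
Definition comp (f g : nat -> Tt nat) : nat -> Tt nat := fun i =>
  match f i with
  | Ex => Ex
  | Fa => Fa
  | Pt j => g j
  | Wt r j =>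
      match g j with
      | Ex => Ex
      | Fa => Fa
      | Pt k => Wt r k
      | Wt r' k => Wt (r + r') k
      end
  end.

Definition shiftT (n : nat) (v : Tt nat) : Tt nat :=
  match v with Pt j => Pt (n + j)%nat | Wt r j => Wt r (n + j)%nat | Ex => Ex | Fa => Fa end.

Definition sum (m n : nat) (f g : nat -> Tt nat) : nat -> Tt nat := fun i =>
  if (i <? m)%nat then f i else shiftT n (g (i - m)%nat).

Definition sym (m n : nat) : nat -> Tt nat := fun i =>
  if (i <? m)%nat then Pt (n + i)%nat else Pt (i - m)%nat.

Definition cont (l : nat) (v : Tt nat) : bool :=
  match v with Pt k => (k <? l)%nat | Wt _ k => (k <? l)%nat | _ => false end.

Definition nxt (f : nat -> Tt nat) (v : Tt nat) : Tt nat :=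
  match v with Pt k => f k | Wt _ k => f k | Ex => Ex | Fa => Fa end.

(* the sequence v_0, v_1, ... for input i (0-based), made total by staying
   constant once it has stopped *)
Fixpoint vseq (l : nat) (f : nat -> Tt nat) (i : nat) (j : nat) : Tt nat :=
  match j with
  | O => Pt (l + i)%nat
  | S j' => let u := vseq l f i j' in
            if (Nat.eqb j' 0 || cont l u)%bool then nxt f u else u
  end.

Definition isW (v : Tt nat) : bool := match v with Wt _ _ => true | _ => false end.
Definition weight (v : Tt nat) : R := match v with Wt r _ => r | _ => 0 end.

Definition finite_seq (l : nat) (f : nat -> Tt nat) (i : nat) : Prop :=
  exists K, (1 <= K)%nat /\ cont l (vseq l f i K) = false.

Definition stopK (l : nat) (f : nat -> Tt nat) (i : nat) : nat :=
  epsilon (inhabits O) (fun K => (1 <= K)%nat /\ cont l (vseq l f i K) = false /\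
     forall j, (1 <= j)%nat -> (j < K)%nat -> cont l (vseq l f i j) = true).

Fixpoint rsum (g : nat -> R) (a c : nat) : R :=
  match c with O => 0 | S c' => g a + rsum g (S a) c' end.

Definition nextW (l : nat) (f : nat -> Tt nat) (i : nat) (p : nat) : nat :=
  epsilon (inhabits O) (fun j => (p < j)%nat /\ isW (vseq l f i j) = true /\
     forall k, (p < k)%nat -> (k < j)%nat -> isW (vseq l f i k) = false).

Fixpoint posW (l : nat) (f : nat -> Tt nat) (i : nat) (t : nat) : nat :=
  match t with O => nextW l f i O | S t' => nextW l f i (posW l f i t') end.

Definition wprime (l : nat) (f : nat -> Tt nat) (i : nat) (t : nat) : R :=
  weight (vseq l f i (posW l f i t)).

(* (1/N) sum_{t=1}^N w'_t  (N >= 1; value at N = 0 irrelevant for the liminf) *)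
Definition avgW (l : nat) (f : nat -> Tt nat) (i : nat) (N : nat) : R :=
  match N with O => 0 | _ => rsum (wprime l f i) 0 N / INR N end.

Definition tr (l : nat) (f : nat -> Tt nat) : nat -> Tt nat := fun i =>
  if excluded_middle_informative (finite_seq l f i) then
    let K := stopK l f i in
    let S := rsum (fun j => weight (vseq l f i j)) 1 K in
    match vseq l f i K with
    | Ex => Ex
    | Fa => Fa
    | Pt k => if existsb (fun j => isW (vseq l f i j)) (seq 1 (K - 1))
              then Wt S (k - l)%nat else Pt (k - l)%nat
    | Wt _ k => Wt S (k - l)%nat
    end
  else
    if Rbar_le_dec (Finite 0) (LimInf_seq (avgW l f i)) then Ex else Fa.

Definition well_defined_ops : Prop :=
  (forall m, Arr m m idA) /\
  (forall m l n f g, Arr m l f -> Arr l n g -> Arr m n (comp f g)) /\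
  (forall m n k l' f g, Arr m n f -> Arr k l' g -> Arr (m + k) (n + l') (sum m n f g)) /\
  (forall m n, Arr (m + n) (n + m) (sym m n)) /\
  (forall l m n f, Arr (l + m) (l + n) f -> Arr m n (tr l f)).

Definition category_axioms : Prop :=
  (forall m n f, Arr m n f -> eqA m (comp idA f) f) /\
  (forall m n f, Arr m n f -> eqA m (comp f idA) f) /\
  (forall m n p q f g h, Arr m n f -> Arr n p g -> Arr p q h ->
     eqA m (comp (comp f g) h) (comp f (comp g h))).

Definition monoidal_axioms : Prop :=
  (forall m n, eqA (m + n) (sum m m idA idA) idA) /\
  (forall m n p m' n' p' f g f' g',
     Arr m n f -> Arr n p g -> Arr m' n' f' -> Arr n' p' g' ->
     eqA (m + m') (sum m p (comp f g) (comp f' g'))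
                  (comp (sum m n f f') (sum n p g g'))) /\
  (forall m n m' n' m'' n'' f g h,
     Arr m n f -> Arr m' n' g -> Arr m'' n'' h ->
     eqA (m + m' + m'') (sum (m + m') (n + n') (sum m n f g) h)
                        (sum m n f (sum m' n' g h))) /\
  (forall m n f, Arr m n f -> eqA m (sum 0 0 idA f) f) /\
  (forall m n f, Arr m n f -> eqA m (sum m n f idA) f).

Definition symmetry_axioms : Prop :=
  (forall m n m' n' f g, Arr m n f -> Arr m' n' g ->
     eqA (m + m') (comp (sum m n f g) (sym n n')) (comp (sym m m') (sum m' n' g f))) /\
  (forall m n, eqA (m + n) (comp (sym m n) (sym n m)) idA) /\
  (forall m n k, eqA (m + (n + k)) (sym m (n + k))
                     (comp (sum (m + n) (n + m) (sym m n) idA) (sum n n idA (sym m k)))).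

Definition trace_axioms : Prop :=
  (forall l m n m' n' f g h, Arr m' m g -> Arr (l + m) (l + n) f -> Arr n n' h ->
     eqA m' (tr l (comp (comp (sum l l idA g) f) (sum l l idA h)))
            (comp (comp g (tr l f)) h)) /\
  (forall l l' m n f k, Arr (l + m) (l' + n) f -> Arr l' l k ->
     eqA m (tr l (comp f (sum l' l k idA))) (tr l' (comp (sum l' l k idA) f))) /\
  (forall m n f, Arr m n f -> eqA m (tr 0 f) f) /\
  (forall l l' m n f, Arr (l + l' + m) (l + l' + n) f ->
     eqA m (tr (l + l') f) (tr l' (tr l f))) /\
  (forall l m n m' n' f g, Arr (l + m) (l + n) f -> Arr m' n' g ->
     eqA (m + m') (sum m n (tr l f) g) (tr l (sum (l + m) (l + n) f g))) /\
  (forall m, eqA m (tr m (sym m m)) idA).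

Definition traced_symmetric_monoidal : Prop :=
  well_defined_ops /\ category_axioms /\ monoidal_axioms /\
  symmetry_axioms /\ trace_axioms.

(* Main.v *)
From Stdlib Require Import Reals Arith ZArith List Lia Lra ClassicalEpsilon Classical FunctionalExtensionality.
From Coquelicot Require Import Coquelicot.
Require Import Defs.
Open Scope R_scope.

Implicit Types (f g h G : nat -> Tt nat) (e : Tt nat) (i j m n p : nat).

Definition addw (r : R) (x : Tt nat) : Tt nat :=
  match x with Pt k => Wt r k | Wt r' k => Wt (r + r') k | Ex => Ex | Fa => Fa end.
Definition ap (e : Tt nat) (g : nat -> Tt nat) : Tt nat :=
  match e with Ex => Ex | Fa => Fa | Pt j => g j | Wt r j => addw r (g j) end.
Definition tg (k : nat) (v : Tt nat) : Prop := v = Pt k \/ exists r, v = Wt r k.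
Definition tgt (v : Tt nat) : nat := match v with Pt k => k | Wt _ k => k | _ => O end.

Lemma comp_ap f g i : comp f g i = ap (f i) g.
Proof. unfold comp, ap. destruct (f i); auto; destruct (g n); auto. Qed.

Lemma addw_assoc r s x : addw (r + s) x = addw r (addw s x).
Proof. destruct x; simpl; auto. f_equal; ring. Qed.

Lemma ap_addw r e g : ap (addw r e) g = addw r (ap e g).
Proof. destruct e; simpl; auto. apply addw_assoc. Qed.

Lemma shiftT_addw n r x : shiftT n (addw r x) = addw r (shiftT n x).
Proof. destruct x; reflexivity. Qed.

Lemma ap_shift n e G : ap (shiftT n e) G = ap e (fun j => G (n + j)%nat).
Proof. destruct e; reflexivity. Qed.

Lemma shift_ap p e g : shiftT p (ap e g) = ap e (fun j => shiftT p (g j)).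
Proof. destruct e; simpl; auto. apply shiftT_addw. Qed.

Lemma shiftT_shiftT a b x : shiftT a (shiftT b x) = shiftT (a + b) x.
Proof. destruct x; simpl; auto; f_equal; lia. Qed.

Lemma shiftT_0 x : shiftT 0 x = x.
Proof. destruct x; reflexivity. Qed.

Lemma ap_ext n e g g' : labels_lt n e -> (forall j, (j < n)%nat -> g j = g' j) -> ap e g = ap e g'.
Proof. destruct e; simpl; intros; auto; rewrite H0; auto. Qed.

Lemma realiz_tg m f i k j : realizable m f -> (i < m)%nat -> f i = Pt k -> (j < m)%nat -> j <> i -> ~ tg k (f j).
Proof.
  intros R Hi Hf Hj Hne [H|[r H]]; destruct (R i k Hi Hf j Hj Hne) as [A B]; auto. eapply B; eauto.
Qed.

Lemma tg_addw k r x : tg k (addw r x) -> tg k x.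
Proof. unfold tg; destruct x; simpl; intros [H|[s H]]; try discriminate; inversion H; subst; eauto. Qed.

Lemma ap_Pt e g k : ap e g = Pt k -> exists a, e = Pt a /\ g a = Pt k.
Proof. destruct e; simpl; intros H; try discriminate; eauto. destruct (g n); discriminate. Qed.

Lemma ap_tg e g k : tg k (ap e g) -> exists a, tg a e /\ tg k (g a).
Proof.
  destruct e; simpl; intros H.
  - exists n; split; auto. left; auto.
  - exists n; split. right; eauto. eapply tg_addw; eauto.
  - destruct H as [H|[r H]]; discriminate.
  - destruct H as [H|[r H]]; discriminate.
Qed.

Lemma labels_addw n r x : labels_lt n x -> labels_lt n (addw r x).
Proof. destruct x; simpl; auto. Qed.

Lemma labels_ap l n e g : labels_lt l e -> (forall j, (j < l)%nat -> labels_lt n (g j)) -> labels_lt n (ap e g).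
Proof. destruct e; simpl; intros; auto. apply labels_addw; auto. Qed.

Lemma labels_shift n k x : labels_lt k x -> labels_lt (n + k) (shiftT n x).
Proof. destruct x; simpl; auto; lia. Qed.

Lemma cat_ok : category_axioms.
Proof.
  split; [|split].
  - intros m n f _ i _. reflexivity.
  - intros m n f _ i _. unfold comp, idA. destruct (f i); auto.
  - intros m n p q f g h _ _ _ i _. rewrite !comp_ap. destruct (f i); simpl; try rewrite comp_ap; try rewrite ap_addw; auto.
Qed.

Lemma comp_Arr m l n f g : Arr m l f -> Arr l n g -> Arr m n (comp f g).
Proof.
  intros [Lf Rf] [Lg Rg]. split.
  - intros i Hi. rewrite comp_ap. eapply labels_ap; eauto.
  - intros i k Hi H j Hj Hne. rewrite comp_ap in H. apply ap_Pt in H as [a [Ha Hga]].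
    assert (Hal : (a < l)%nat) by (specialize (Lf i Hi); rewrite Ha in Lf; exact Lf).
    assert (~ tg k (comp f g j)).
    { rewrite comp_ap. intros Ht. apply ap_tg in Ht as [b [Hb Hgb]].
      assert (Hbl : (b < l)%nat).
      { specialize (Lf j Hj). destruct Hb as [Hb|[r Hb]]; rewrite Hb in Lf; exact Lf. }
      destruct (Nat.eq_dec b a) as [Hba|Hba].
      - subst b. eapply (realiz_tg m f i a j); eauto.
      - eapply (realiz_tg l g a k b); eauto. }
    split; [intros E|intros r E]; apply H; [left; auto| right; eauto].
Qed.

Lemma id_Arr m : Arr m m idA.
Proof.
  split. intros i Hi; simpl; auto.
  intros i k Hi H j Hj Hne. unfold idA in *. inversion H; subst.
  split; [intros E|intros r E]; inversion E; auto.
Qed.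

Lemma sum_Arr m n k l' f g : Arr m n f -> Arr k l' g -> Arr (m + k) (n + l') (sum m n f g).
Proof.
  intros [Lf Rf] [Lg Rg]. split.
  - intros i Hi. unfold sum. destruct (Nat.ltb_spec i m).
    + specialize (Lf i H). destruct (f i); simpl in *; auto; lia.
    + apply labels_shift. apply Lg. lia.
  - intros i c Hi H j Hj Hne.
    assert (~ tg c (sum m n f g j)).
    { unfold sum in *. intros Ht. revert H Ht.
      destruct (i <? m) eqn:H0; [apply Nat.ltb_lt in H0|apply Nat.ltb_ge in H0];
      destruct (j <? m) eqn:H1; [apply Nat.ltb_lt in H1|apply Nat.ltb_ge in H1| apply Nat.ltb_lt in H1|apply Nat.ltb_ge in H1];
      intros H Ht.
      all: first
        [ solve [eapply (realiz_tg m f i c j); eauto]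
        | solve [specialize (Lf i H0); rewrite H in Lf; simpl in Lf;
            destruct (g (j - m)%nat); simpl in Ht; destruct Ht as [Ht|[r' Ht]]; inversion Ht; lia]
        | solve [specialize (Lf j H1); destruct Ht as [Ht|[r' Ht]]; rewrite Ht in Lf; simpl in Lf;
            destruct (g (i - m)%nat) eqn:E; simpl in H; inversion H; lia]
        | solve [destruct (g (i - m)%nat) eqn:E; simpl in H; inversion H; subst;
            eapply (realiz_tg k g (i - m) n0 (j - m)); eauto; try lia;
            destruct (g (j - m)%nat); simpl in Ht; destruct Ht as [Ht|[r' Ht]]; inversion Ht;
            [left|right; exists r']; f_equal; lia] ]. }
    split; [intros E|intros r E]; apply H0; [left; auto| right; eauto].
Qed.

Lemma sym_Arr m n : Arr (m + n) (n + m) (sym m n).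
Proof.
  split.
  - intros i Hi. unfold sym. destruct (Nat.ltb_spec i m); simpl; lia.
  - intros i c Hi H j Hj Hne. unfold sym in *. revert H.
    destruct (Nat.ltb_spec i m) as [Q1|Q1], (Nat.ltb_spec j m) as [Q2|Q2]; intros H; inversion H; subst;
      (split; [intros E|intros r E]); inversion E; lia.
Qed.

Lemma monoidal_ok : monoidal_axioms.
Proof.
  split; [|split; [|split; [|split]]].
  - intros m n i Hi. unfold sum, idA. destruct (Nat.ltb_spec i m); simpl; auto. f_equal; lia.
  - intros m n p m' n' p' f g f' g' [Lf _] [Lg _] [Lf' _] [Lg' _] i Hi.
    unfold sum. rewrite !comp_ap. destruct (Nat.ltb_spec i m).
    + apply (ap_ext n). auto. intros j Hj. destruct (Nat.ltb_spec j n); auto; lia.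
    + rewrite ap_shift, shift_ap. apply (ap_ext n'). apply Lf'; lia.
      intros j Hj. destruct (Nat.ltb_spec (n + j) n); try lia. f_equal. f_equal. lia.
  - intros m n m' n' m'' n'' f g h _ _ _ i Hi. unfold sum.
    destruct (Nat.ltb_spec i (m + m')), (Nat.ltb_spec i m), (Nat.ltb_spec (i - m) m'); auto; try lia.
    rewrite shiftT_shiftT. f_equal. f_equal. lia.
  - intros m n f _ i Hi. unfold sum. simpl. rewrite shiftT_0. f_equal; lia.
  - intros m n f _ i Hi. unfold sum. destruct (Nat.ltb_spec i m); auto; lia.
Qed.

Lemma symmetry_ok : symmetry_axioms.
Proof.
  split; [|split].
  - intros m n m' n' f g [Lf _] [Lg _] i Hi. rewrite !comp_ap. unfold sum, sym.
    destruct (Nat.ltb_spec i m) as [Q|Q].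
    + simpl. destruct (Nat.ltb_spec (m' + i) m'); try lia.
      replace (m' + i - m')%nat with i by lia.
      specialize (Lf i Q). destruct (f i); simpl in *; auto;
        destruct (Nat.ltb_spec n0 n); try lia; auto.
    + simpl. destruct (Nat.ltb_spec (i - m) m'); try lia.
      specialize (Lg (i - m)%nat ltac:(lia)). destruct (g (i - m)%nat); simpl in *; auto;
        destruct (Nat.ltb_spec (n + n0) n); try lia; replace (n + n0 - n)%nat with n0 by lia; reflexivity.
  - intros m n i Hi. unfold comp, sym, idA.
    destruct (Nat.ltb_spec i m); [destruct (Nat.ltb_spec (n + i) n)|destruct (Nat.ltb_spec (i - m) n)];
      f_equal; lia.
  - intros m n k i Hi. rewrite comp_ap. unfold sum, sym, idA.
    destruct (Nat.ltb_spec i m), (Nat.ltb_spec i (m + n)); simpl; try lia.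
    + destruct (Nat.ltb_spec (n + i) n); try lia. destruct (Nat.ltb_spec (n + i - n) m); try lia. simpl; f_equal; lia.
    + destruct (Nat.ltb_spec (i - m) n); try lia. auto.
    + destruct (Nat.ltb_spec (n + m + (i - (m + n))) n); try lia.
      destruct (Nat.ltb_spec (n + m + (i - (m + n)) - n) m); try lia. simpl; f_equal; lia.
Qed.

Definition step l f (u : Tt nat) : Tt nat := if cont l u then nxt f u else u.
Fixpoint sF l f e j : Tt nat := match j with O => e | S j' => step l f (sF l f e j') end.

Definition down l e : Tt nat :=
  match e with Pt k => Pt (k - l)%nat | Wt r k => Wt r (k - l)%nat | Ex => Ex | Fa => Fa end.
Definition join e (r : Tt nat) : Tt nat := match e with Wt s _ => addw s r | _ => r end.

Inductive walk (l : nat) (f : nat -> Tt nat) : Tt nat -> Tt nat -> Prop :=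
| wstop : forall e, cont l e = false -> walk l f e (down l e)
| wstep : forall e r, cont l e = true -> walk l f (f (tgt e)) r -> walk l f e (join e r).

Lemma cont_true l e : cont l e = true -> exists k, (k < l)%nat /\ tg k e /\ tgt e = k.
Proof.
  destruct e; simpl; intros H; try discriminate; apply Nat.ltb_lt in H;
    exists n; repeat split; auto; unfold tg; eauto.
Qed.

Lemma step_cont l f e : cont l e = true -> step l f e = f (tgt e).
Proof. unfold step; intros H; rewrite H. destruct e; simpl in *; auto; discriminate. Qed.

Lemma step_stop l f e : cont l e = false -> step l f e = e.
Proof. unfold step; intros H; rewrite H; auto. Qed.

Lemma sF_S l f e j : sF l f e (S j) = sF l f (step l f e) j.
Proof. induction j; simpl; auto. rewrite <- IHj. reflexivity. Qed.

Lemma sF_add l f e p j : sF l f e (p + j) = sF l f (sF l f e p) j.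
Proof. induction j; simpl. rewrite Nat.add_0_r; auto. rewrite Nat.add_succ_r. simpl. rewrite IHj; auto. Qed.

Lemma vseq_sF l f i j : vseq l f i (S j) = sF l f (f (l + i)%nat) j.
Proof.
  induction j. reflexivity.
  change (step l f (vseq l f i (S j)) = step l f (sF l f (f (l + i)%nat) j)).
  rewrite IHj. reflexivity.
Qed.

Lemma walk_det l f e r1 r2 : walk l f e r1 -> walk l f e r2 -> r1 = r2.
Proof.
  intros H1; revert r2; induction H1; intros r2 H2; inversion H2; subst; auto; try congruence.
  f_equal. apply IHwalk. auto.
Qed.

Lemma walk_sF l f e r : walk l f e r ->
  exists K, (forall j, (j < K)%nat -> cont l (sF l f e j) = true) /\ cont l (sF l f e K) = false.
Proof.
  induction 1.
  - exists O; split; auto; intros; lia.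
  - destruct IHwalk as [K [H1 H2]]. exists (S K). split.
    + intros j Hj. destruct j; [simpl; auto|]. rewrite sF_S, step_cont; auto. apply H1; lia.
    + rewrite sF_S, step_cont; auto.
Qed.

Lemma sF_walk l f K : forall e, cont l (sF l f e K) = false -> exists r, walk l f e r.
Proof.
  induction K; intros e H.
  - eexists; apply wstop; auto.
  - destruct (cont l e) eqn:E.
    + rewrite sF_S, step_cont in H; auto. destruct (IHK _ H) as [r Hr]. eexists; apply wstep; eauto.
    + eexists; apply wstop; auto.
Qed.

Lemma finite_iff l f i : finite_seq l f i <-> exists K, cont l (sF l f (f (l + i)%nat) K) = false.
Proof.
  split.
  - intros [K [H1 H2]]. destruct K. lia. rewrite vseq_sF in H2. eauto.
  - intros [K H]. exists (S K). split. lia. rewrite vseq_sF. auto.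
Qed.

Lemma least_nat (P : nat -> Prop) n : P n -> exists k, P k /\ forall m, (m < k)%nat -> ~ P m.
Proof.
  revert n. induction n as [n IH] using (well_founded_induction lt_wf). intros Hn.
  destruct (classic (exists m, (m < n)%nat /\ P m)) as [[m [Hm Pm]]|N].
  - eapply IH; eauto.
  - exists n; split; auto. intros m Hm Pm. apply N; eauto.
Qed.

Lemma rsum_shift (g : nat -> R) a c : rsum g (S a) c = rsum (fun j => g (S j)) a c.
Proof. revert a; induction c; intros; simpl; auto. rewrite IHc. auto. Qed.

Lemma rsum_ext (g1 g2 : nat -> R) a c : (forall j, g1 j = g2 j) -> rsum g1 a c = rsum g2 a c.
Proof. intros H; revert a; induction c; intros; simpl; auto. rewrite H, IHc; auto. Qed.

Lemma rsum_snoc (g : nat -> R) a c : rsum g a (S c) = rsum g a c + g (a + c)%nat.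
Proof.
  revert a; induction c; intros a. simpl. rewrite Nat.add_0_r; ring.
  change (rsum g a (S (S c))) with (g a + rsum g (S a) (S c)). rewrite IHc.
  change (rsum g a (S c)) with (g a + rsum g (S a) c). replace (a + S c)%nat with (S a + c)%nat by lia. ring.
Qed.

Lemma rsum_add (g : nat -> R) a c d : rsum g a (c + d) = rsum g a c + rsum g (a + c) d.
Proof.
  revert a; induction c; intros a. simpl. rewrite Nat.add_0_r; ring.
  simpl. rewrite IHc. replace (a + S c)%nat with (S a + c)%nat by lia. ring.
Qed.

Lemma rsum_zero (g : nat -> R) a c : (forall j, (a <= j < a + c)%nat -> g j = 0) -> rsum g a c = 0.
Proof.
  revert a; induction c; intros a H; simpl; auto. rewrite H by lia. rewrite IHc. ring. intros; apply H; lia.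
Qed.

Lemma weight_nW v : isW v = false -> weight v = 0.
Proof. destruct v; simpl; auto; discriminate. Qed.

Lemma existsb_false_seq (g : nat -> bool) a c : existsb g (seq a c) = false -> forall j, (a <= j < a + c)%nat -> g j = false.
Proof.
  revert a; induction c; intros a H j Hj. lia. simpl in H. apply Bool.orb_false_iff in H as [H1 H2].
  destruct (Nat.eq_dec j a). subst; auto. apply (IHc (S a)); auto; lia.
Qed.

Lemma existsb_seq_S (g : nat -> bool) a c : existsb g (seq (S a) c) = existsb (fun j => g (S j)) (seq a c).
Proof. revert a; induction c; intros a; simpl; auto. rewrite IHc. auto. Qed.

Definition RES l f e K : Tt nat :=
  match sF l f e K with
  | Ex => Ex | Fa => Fa
  | Pt k => if existsb (fun j => isW (sF l f e j)) (seq 0 K)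
            then Wt (rsum (fun j => weight (sF l f e j)) 0 (S K)) (k - l)%nat else Pt (k - l)%nat
  | Wt _ k => Wt (rsum (fun j => weight (sF l f e j)) 0 (S K)) (k - l)%nat
  end.

Lemma walk_res l f K : forall e, (forall j, (j < K)%nat -> cont l (sF l f e j) = true) ->
  cont l (sF l f e K) = false -> walk l f e (RES l f e K).
Proof.
  induction K; intros e H1 H2.
  - unfold RES; simpl in *. replace (match e with Ex => Ex | Fa => Fa
      | Pt k => Pt (k - l)%nat | Wt _ k => Wt (weight e + 0) (k - l)%nat end) with (down l e).
    apply wstop; auto. destruct e; simpl; auto. rewrite Rplus_0_r; auto.
  - assert (Ce : cont l e = true) by (apply (H1 O); lia).
    set (e' := f (tgt e)).
    assert (Hs : forall j, sF l f e (S j) = sF l f e' j) by (intros; rewrite sF_S, step_cont; auto).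
    assert (W : walk l f e' (RES l f e' K)).
    { apply IHK. intros j Hj. rewrite <- Hs. apply H1; lia. rewrite <- Hs; auto. }
    replace (RES l f e (S K)) with (join e (RES l f e' K)). apply wstep; auto.
    unfold RES. rewrite Hs.
    assert (Ex1 : existsb (fun j => isW (sF l f e j)) (seq 0 (S K)) =
              (isW e || existsb (fun j => isW (sF l f e' j)) (seq 0 K))%bool).
    { simpl. f_equal. rewrite existsb_seq_S. apply f_equal2; auto.
      apply functional_extensionality; intros; rewrite Hs; auto. }
    assert (Rs : rsum (fun j => weight (sF l f e j)) 0 (S (S K)) =
              weight e + rsum (fun j => weight (sF l f e' j)) 0 (S K)).
    { change (rsum (fun j => weight (sF l f e j)) 0 (S (S K))) with
        (weight (sF l f e 0) + rsum (fun j => weight (sF l f e j)) 1 (S K)).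
      rewrite rsum_shift. f_equal. apply rsum_ext. intros; rewrite Hs; auto. }
    rewrite Ex1, Rs.
    destruct e as [x|s x| |]; simpl in Ce; try discriminate; simpl.
    + destruct (sF l f e' K); auto; rewrite Rplus_0_l; auto.
    + destruct (sF l f e' K) eqn:EK; simpl; auto.
      destruct (existsb (fun j => isW (sF l f e' j)) (seq 0 K)) eqn:EB; simpl; auto.
      change (weight e' + rsum (fun j => weight (sF l f e' j)) 1 K) with
        (rsum (fun j => weight (sF l f e' j)) 0 (S K)).
      rewrite rsum_snoc, rsum_zero, Nat.add_0_l, EK. simpl. f_equal; ring.
      intros j Hj. apply weight_nW. eapply existsb_false_seq in EB; eauto.
Qed.

Lemma stopK_eq l f i K0 : (1 <= K0)%nat -> cont l (vseq l f i K0) = false ->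
  (forall j, (1 <= j)%nat -> (j < K0)%nat -> cont l (vseq l f i j) = true) -> stopK l f i = K0.
Proof.
  intros A B C. unfold stopK.
  set (P := fun K => (1 <= K)%nat /\ cont l (vseq l f i K) = false /\
     forall j, (1 <= j)%nat -> (j < K)%nat -> cont l (vseq l f i j) = true).
  assert (HP : P K0) by (split; auto).
  destruct (epsilon_spec (inhabits O) P (ex_intro _ _ HP)) as [A' [B' C']].
  set (K1 := epsilon (inhabits O) P) in *.
  destruct (lt_eq_lt_dec K1 K0) as [[H|H]|H]; auto.
  - rewrite C in B' by lia. discriminate.
  - rewrite C' in B by lia. discriminate.
Qed.

Lemma tr_fin l f i : finite_seq l f i -> walk l f (f (l + i)%nat) (tr l f i).
Proof.
  intros Hfin. pose proof Hfin as Hf'. apply finite_iff in Hf' as [K HK].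
  destruct (least_nat (fun K => cont l (sF l f (f (l + i)%nat) K) = false) K HK) as [K0 [H0 Hmin]].
  assert (Hc : forall j, (j < K0)%nat -> cont l (sF l f (f (l + i)%nat) j) = true).
  { intros j Hj. destruct (cont l (sF l f (f (l + i)%nat) j)) eqn:E; auto. exfalso; eapply Hmin; eauto. }
  assert (Hst : stopK l f i = S K0).
  { apply stopK_eq. lia. rewrite vseq_sF; auto.
    intros j A B. destruct j. lia. rewrite vseq_sF. apply Hc. lia. }
  pose proof (walk_res l f K0 (f (l + i)%nat) Hc H0) as W.
  unfold tr. destruct (excluded_middle_informative (finite_seq l f i)) as [_|C]; [|contradiction].
  cbv zeta. rewrite Hst. replace (S K0 - 1)%nat with K0 by lia. rewrite vseq_sF.
  assert (E1 : rsum (fun j => weight (vseq l f i j)) 1 (S K0) =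
               rsum (fun j => weight (sF l f (f (l + i)%nat) j)) 0 (S K0)).
  { rewrite rsum_shift. apply rsum_ext. intros; rewrite vseq_sF; auto. }
  assert (E2 : existsb (fun j => isW (vseq l f i j)) (seq 1 K0) =
               existsb (fun j => isW (sF l f (f (l + i)%nat) j)) (seq 0 K0)).
  { rewrite existsb_seq_S. f_equal. apply functional_extensionality; intros; rewrite vseq_sF; auto. }
  rewrite E1, E2. unfold RES in W. exact W.
Qed.

Lemma tr_walk l f i r : walk l f (f (l + i)%nat) r -> tr l f i = r.
Proof.
  intros W. assert (Hfin : finite_seq l f i).
  { apply finite_iff. destruct (walk_sF _ _ _ _ W) as [K [_ HK]]. eauto. }
  eapply walk_det. apply tr_fin; auto. auto.
Qed.

Lemma tr_infinite l f i : ~ finite_seq l f i ->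
  tr l f i = if Rbar_le_dec (Finite 0) (LimInf_seq (avgW l f i)) then Ex else Fa.
Proof.
  intros H. unfold tr. destruct (excluded_middle_informative (finite_seq l f i)); [contradiction|auto].
Qed.

Definition BB (P : nat -> R) : Prop := exists B, forall N, B <= P N.

Lemma arch_nat r : exists n : nat, r < INR n.
Proof.
  destruct (archimed r) as [H1 _].
  destruct (Z_lt_le_dec (up r) 0) as [Hz|Hz].
  - exists O. simpl. apply IZR_lt in Hz. lra.
  - exists (Z.to_nat (up r)). rewrite INR_IZR_INZ, Z2Nat.id by lia. lra.
Qed.

Lemma finite_bound (D : nat -> R) N : exists M, forall p, (p < N)%nat -> Rabs (D p) <= M.
Proof.
  induction N. exists 0; intros; lia.
  destruct IHN as [M HM]. exists (Rmax M (Rabs (D N))). intros p Hp.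
  destruct (Nat.eq_dec p N). subst; apply Rmax_r. eapply Rle_trans. apply HM; lia. apply Rmax_l.
Qed.

Definition DP (P : nat -> R) (p0 q : nat) (s : R) : Prop :=
  (1 <= q)%nat /\ forall p, (p0 <= p)%nat -> P (p + q)%nat = P p + s.

Lemma lin_bounds P p0 q s : DP P p0 q s ->
  exists M, forall p, Rabs (P p - s / INR q * INR p) <= M.
Proof.
  intros [Hq HP]. set (D := fun p => P p - s / INR q * INR p).
  assert (Hqr : 0 < INR q) by (apply lt_0_INR; lia).
  assert (HD : forall p, (p0 <= p)%nat -> D (p + q)%nat = D p).
  { intros p Hp. unfold D. rewrite HP, plus_INR by auto. field. lra. }
  destruct (finite_bound D (p0 + q)) as [M HM]. exists M.
  intros p. induction p as [p IH] using (well_founded_induction lt_wf).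
  destruct (lt_dec p (p0 + q)). apply HM; auto.
  replace p with ((p - q) + q)%nat by lia. fold (D ((p - q) + q)%nat). rewrite HD by lia. apply IH. lia.
Qed.

Lemma BB_iff_s P p0 q s : DP P p0 q s -> (BB P <-> 0 <= s).
Proof.
  intros H. pose proof H as [Hq _]. destruct (lin_bounds _ _ _ _ H) as [M HM].
  assert (Hqr : 0 < INR q) by (apply lt_0_INR; lia).
  split.
  - intros [B HB]. destruct (Rle_lt_dec 0 s) as [|Hs]; auto. exfalso.
    assert (Hsq : s / INR q < 0) by (unfold Rdiv; apply Rmult_neg_pos; auto; apply Rinv_0_lt_compat; auto).
    destruct (arch_nat ((M - B + 1) / (- (s / INR q)))) as [N HN].
    specialize (HB N). specialize (HM N). apply Rabs_le_between in HM.
    assert (INR N * (- (s / INR q)) > M - B + 1).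
    { apply Rmult_lt_reg_r with (/ (- (s / INR q))). apply Rinv_0_lt_compat; lra.
      rewrite Rmult_assoc, Rinv_r by lra. unfold Rdiv in HN. lra. }
    nra.
  - intros Hs. exists (- M). intros N. specialize (HM N). apply Rabs_le_between in HM.
    assert (0 <= s / INR q * INR N). { apply Rmult_le_pos. apply Rdiv_le_0_compat; auto. apply pos_INR. }
    lra.
Qed.

Lemma BB_cofinal P Pc p0 q s : DP P p0 q s ->
  (forall N, exists p, (N <= p)%nat /\ Pc N = P p) -> (BB P <-> BB Pc).
Proof.
  intros H Hc. split.
  - intros [B HB]. exists B. intros N. destruct (Hc N) as [p [_ E]]. rewrite E; auto.
  - intros [B HB]. apply (BB_iff_s _ _ _ _ H). pose proof H as [Hq _].
    destruct (lin_bounds _ _ _ _ H) as [M HM].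
    assert (Hqr : 0 < INR q) by (apply lt_0_INR; lia).
    destruct (Rle_lt_dec 0 s) as [|Hs]; auto. exfalso.
    assert (Hsq : s / INR q < 0) by (unfold Rdiv; apply Rmult_neg_pos; auto; apply Rinv_0_lt_compat; auto).
    destruct (arch_nat ((M - B + 1) / (- (s / INR q)))) as [N HN].
    destruct (Hc N) as [p [Hp E]]. specialize (HB N). rewrite E in HB.
    specialize (HM p). apply Rabs_le_between in HM.
    assert (INR N * (- (s / INR q)) > M - B + 1).
    { apply Rmult_lt_reg_r with (/ (- (s / INR q))). apply Rinv_0_lt_compat; lra.
      rewrite Rmult_assoc, Rinv_r by lra. unfold Rdiv in HN. lra. }
    apply le_INR in Hp. nra.
Qed.

Lemma BB_bounded_diff P1 P2 C : (forall N, Rabs (P1 N - P2 N) <= C) -> (BB P1 <-> BB P2).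
Proof.
  intros H. split; intros [B HB]; exists (B - C); intros N; specialize (H N); specialize (HB N);
    apply Rabs_le_between in H; lra.
Qed.

Lemma BB_S P : BB (fun N => P (S N)) <-> BB P.
Proof.
  split; intros [B HB].
  - exists (Rmin B (P O)). intros [|N]. apply Rmin_r. eapply Rle_trans. apply Rmin_l. apply HB.
  - exists B. intros; apply HB.
Qed.

Definition PS l f e (p : nat) : R := rsum (fun j => weight (sF l f e j)) 0 p.

Lemma PS_S l f e p : PS l f e (S p) = PS l f e p + weight (sF l f e p).
Proof. unfold PS. rewrite rsum_snoc. auto. Qed.

Lemma pigeon l : forall (x : nat -> nat), (forall j, (j <= l)%nat -> (x j < l)%nat) ->
  exists a b, (a < b)%nat /\ (b <= l)%nat /\ x a = x b.
Proof.
  induction l; intros x Hx.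
  - specialize (Hx O ltac:(lia)). lia.
  - set (v := x (S l)).
    destruct (classic (exists j, (j <= l)%nat /\ x j = v)) as [[j [Hj E]]|N].
    + exists j, (S l). repeat split; auto; lia.
    + set (y := fun j => if (x j <? v)%nat then x j else (x j - 1)%nat).
      destruct (IHl y) as [a [b [H1 [H2 H3]]]].
      { intros j Hj. unfold y. assert (x j <> v) by (intros E; apply N; eauto).
        assert (x j < S l)%nat by (apply Hx; lia). assert (v < S l)%nat by (apply Hx; lia).
        destruct (Nat.ltb_spec (x j) v); lia. }
      exists a, b. repeat split; try lia. unfold y in H3.
      assert (x a <> v) by (intros E; apply N; exists a; split; auto; lia).
      assert (x b <> v) by (intros E; apply N; exists b; split; auto; lia).
      destruct (Nat.ltb_spec (x a) v), (Nat.ltb_spec (x b) v); lia.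
Qed.

Lemma sF_S_cont l f e j : cont l (sF l f e j) = true -> sF l f e (S j) = f (tgt (sF l f e j)).
Proof. intros H. simpl. apply step_cont; auto. Qed.

Lemma cont_tg l e : cont l e = true -> tg (tgt e) e.
Proof. intros H. destruct (cont_true _ _ H) as [k [_ [T E]]]. rewrite E; auto. Qed.

Lemma cont_lt l e : cont l e = true -> (tgt e < l)%nat.
Proof. intros H. destruct (cont_true _ _ H) as [k [L [T E]]]. rewrite E; auto. Qed.

Lemma inf_periodic l m n f i : Arr (l + m) (l + n) f -> (i < m)%nat ->
  (forall j, cont l (sF l f (f (l + i)%nat) j) = true) ->
  exists a q, (1 <= q)%nat /\
    (forall j, (a <= j)%nat -> sF l f (f (l + i)%nat) (j + q) = sF l f (f (l + i)%nat) j) /\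
    exists jw, (a <= jw < a + q)%nat /\ isW (sF l f (f (l + i)%nat) jw) = true.
Proof.
  intros [Lf Rf] Hi INF. set (e := f (l + i)%nat) in *.
  set (x := fun j => tgt (sF l f e j)).
  assert (Hx : forall j, (x j < l)%nat) by (intros; apply cont_lt; auto).
  assert (HE : forall j, sF l f e (S j) = f (x j)) by (intros; apply sF_S_cont; auto).
  destruct (pigeon l x) as [a [b [Hab [_ Hxab]]]]. intros; auto.
  destruct (least_nat (fun a => exists b, (a < b)%nat /\ x a = x b) a) as [a0 [[b0 [Hab0 Hx0]] Hmin]]; eauto.
  assert (Hpx : forall t, x (a0 + t)%nat = x (b0 + t)%nat).
  { induction t. rewrite !Nat.add_0_r; auto.
    rewrite !Nat.add_succ_r. unfold x at 1 2. rewrite !HE. rewrite IHt. auto. }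
  exists (S a0), (b0 - a0)%nat. split. lia. split.
  - intros j Hj. destruct j. lia. simpl (S j + (b0 - a0))%nat. rewrite !HE.
    replace (j + (b0 - a0))%nat with (b0 + (j - a0))%nat by lia. rewrite <- Hpx.
    f_equal. f_equal. lia.
  - apply NNPP. intros NW.
    assert (Wb : isW (sF l f e b0) = false).
    { destruct (isW (sF l f e b0)) eqn:E; auto. exfalso. apply NW. exists b0. split; auto. lia. }
    destruct b0 as [|b']. lia.
    assert (Cb := INF (S b')). rewrite HE in Cb, Wb.
    assert (Tb : tgt (f (x b')) = x a0).
    { rewrite Hx0. unfold x at 2. rewrite HE. auto. }
    assert (Pb : f (x b') = Pt (x a0)).
    { destruct (f (x b')) eqn:E; simpl in *; try discriminate; subst; auto. }
    destruct a0 as [|a'].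
    + assert (T0 : tg (x O) (f (l + i)%nat)) by (apply (cont_tg l); apply (INF O)).
      eapply (realiz_tg (l + m) f (x b') (x O) (l + i)%nat Rf); eauto.
      specialize (Hx b'); lia. lia. specialize (Hx b'); lia.
    + assert (Ta : tg (x (S a')) (f (x a'))).
      { unfold x at 1. rewrite HE. apply (cont_tg l). rewrite <- HE. apply INF. }
      destruct (Nat.eq_dec (x a') (x b')) as [E|E].
      * apply (Hmin a'). lia. exists b'. split. lia. auto.
      * eapply (realiz_tg (l + m) f (x b') (x (S a')) (x a') Rf); eauto.
        specialize (Hx b'); lia. specialize (Hx a'); lia.
Qed.

Lemma nextW_spec l f i p : (exists j, (p < j)%nat /\ isW (vseq l f i j) = true) ->
  (p < nextW l f i p)%nat /\ isW (vseq l f i (nextW l f i p)) = true /\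
  forall k, (p < k)%nat -> (k < nextW l f i p)%nat -> isW (vseq l f i k) = false.
Proof.
  intros [j Hj].
  destruct (least_nat (fun j => (p < j)%nat /\ isW (vseq l f i j) = true) j Hj) as [j0 [[A B] C]].
  unfold nextW. apply epsilon_spec. exists j0. repeat split; auto.
  intros k H1 H2. destruct (isW (vseq l f i k)) eqn:E; auto. exfalso. apply (C k); auto.
Qed.

Lemma is_lim_inv_n c : is_lim_seq (fun n => c * / INR n) 0.
Proof.
  replace (Finite 0) with (Rbar_mult c 0) by (simpl; f_equal; ring).
  apply is_lim_seq_scal_l.
  replace (Finite 0) with (Rbar_inv p_infty) by reflexivity.
  apply is_lim_seq_inv. apply is_lim_seq_INR. discriminate.
Qed.

Lemma LimInf_inv_n c d : LimInf_seq (fun n => c * / INR n + d) = Finite d.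
Proof.
  apply is_LimInf_seq_unique. apply is_lim_LimInf_seq.
  replace (Finite d) with (Rbar_plus 0 d) by (simpl; f_equal; ring).
  apply is_lim_seq_plus'. apply is_lim_inv_n. apply is_lim_seq_const.
Qed.

Lemma GI l m n f i : Arr (l + m) (l + n) f -> (i < m)%nat ->
  (forall j, cont l (sF l f (f (l + i)%nat) j) = true) ->
  (exists p0 q s, DP (PS l f (f (l + i)%nat)) p0 q s) /\
  (BB (PS l f (f (l + i)%nat)) -> tr l f i = Ex) /\
  (~ BB (PS l f (f (l + i)%nat)) -> tr l f i = Fa).
Proof.
  intros HA Hi INF.
  destruct (inf_periodic l m n f i HA Hi INF) as [a [q [Hq [Hper [jw [Hjw Wjw]]]]]].
  set (e := f (l + i)%nat) in *. set (P := PS l f e).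
  set (s := P (a + q)%nat - P a).
  assert (HDP : DP P a q s).
  { split; auto. intros p Hp. replace p with (a + (p - a))%nat by lia. generalize (p - a)%nat as d.
    induction d. rewrite Nat.add_0_r. unfold s. ring.
    unfold P. replace (a + S d + q)%nat with (S (a + d + q)) by lia. rewrite Nat.add_succ_r, !PS_S.
    fold P. rewrite IHd. rewrite Hper by lia. ring. }
  assert (Hv : forall j, vseq l f i (S j) = sF l f e j) by (intros; apply vseq_sF).
  assert (Hperk : forall k, sF l f e (jw + k * q)%nat = sF l f e jw).
  { induction k. rewrite Nat.add_0_r; auto. simpl. replace (jw + (q + k * q))%nat with ((jw + k * q) + q)%nat by lia.
    rewrite Hper by lia. auto. }
  assert (ExW : forall p, exists j, (p < j)%nat /\ isW (vseq l f i j) = true).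
  { intros p. exists (S (jw + p * q)). split. nia. rewrite Hv, Hperk. auto. }
  assert (Gap : forall P1 P2, (P1 < P2)%nat -> (forall k, (P1 < k)%nat -> (k < P2)%nat -> isW (vseq l f i k) = false) ->
     P P2 = P P1 + weight (vseq l f i P2)).
  { intros P1 P2 H12 Hk. replace P2 with (P1 + S (P2 - P1 - 1))%nat by lia.
    set (d := (P2 - P1 - 1)%nat). unfold P, PS. rewrite rsum_add, rsum_snoc, (rsum_zero _ (0 + P1)%nat d).
    replace (0 + P1 + d)%nat with (P1 + d)%nat by lia. rewrite Nat.add_succ_r, Hv. ring.
    intros j Hj. apply weight_nW. rewrite <- Hv. apply Hk; lia. }
  assert (Hpos : forall t, (t < posW l f i t)%nat /\ rsum (wprime l f i) 0 (S t) = P (posW l f i t)).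
  { induction t.
    - simpl. destruct (nextW_spec l f i O (ExW O)) as [A [B C]]. split; auto.
      rewrite (Gap O (nextW l f i 0)); auto. unfold wprime. simpl. unfold P, PS. simpl. ring.
    - destruct IHt as [IH1 IH2]. simpl (posW l f i (S t)).
      destruct (nextW_spec l f i _ (ExW (posW l f i t))) as [A [B C]]. split. lia.
      rewrite rsum_snoc, IH2. rewrite (Gap (posW l f i t) (nextW l f i (posW l f i t))); auto. }
  assert (Havg : forall t, avgW l f i (S t) = P (posW l f i t) / INR (S t)).
  { intros t. unfold avgW. rewrite (proj2 (Hpos t)). auto. }
  assert (NF : ~ finite_seq l f i).
  { intros Hf. apply finite_iff in Hf as [K HK]. rewrite INF in HK. discriminate. }
  destruct (lin_bounds _ _ _ _ HDP) as [M HM].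
  assert (Hqr : 0 < INR q) by (apply lt_0_INR; lia).
  set (sig := s / INR q) in *.
  split; [eauto|split].
  - intros HB. apply (BB_iff_s _ _ _ _ HDP) in HB.
    assert (Hsig : 0 <= sig) by (unfold sig; apply Rdiv_le_0_compat; auto).
    rewrite tr_infinite by auto.
    destruct (Rbar_le_dec 0 (LimInf_seq (avgW l f i))) as [|C]; auto. exfalso. apply C.
    rewrite <- (LimInf_inv_n (- M) 0).
    apply LimInf_le. exists 1%nat. intros [|t] Ht. lia.
    rewrite Havg. specialize (HM (posW l f i t)). apply Rabs_le_between in HM.
    assert (0 < INR (S t)) by (apply lt_0_INR; lia).
    assert (0 <= sig * INR (posW l f i t)) by (apply Rmult_le_pos; auto; apply pos_INR).
    rewrite Rplus_0_r. unfold Rdiv. apply Rmult_le_compat_r. left; apply Rinv_0_lt_compat; auto. lra.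
  - intros HB. assert (Hs : s < 0).
    { destruct (Rlt_le_dec s 0); auto. exfalso; apply HB. apply (BB_iff_s _ _ _ _ HDP); auto. }
    assert (Hsig : sig < 0) by (unfold sig, Rdiv; apply Rmult_neg_pos; auto; apply Rinv_0_lt_compat; auto).
    rewrite tr_infinite by auto.
    destruct (Rbar_le_dec 0 (LimInf_seq (avgW l f i))) as [C|]; auto. exfalso.
    assert (C2 : Rbar_le (LimInf_seq (avgW l f i)) (LimInf_seq (fun n => M * / INR n + sig))).
    { apply LimInf_le. exists 1%nat. intros [|t] Ht. lia.
      rewrite Havg. specialize (HM (posW l f i t)). apply Rabs_le_between in HM.
      assert (0 < INR (S t)) by (apply lt_0_INR; lia).
      assert (INR (S t) <= INR (posW l f i t)) by (apply le_INR; apply (proj1 (Hpos t))).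
      assert (sig * INR (posW l f i t) <= sig * INR (S t)) by (apply Rmult_le_compat_neg_l; lra).
      replace (M * / INR (S t) + sig) with ((M + sig * INR (S t)) / INR (S t)) by (field; lra).
      unfold Rdiv. apply Rmult_le_compat_r. left; apply Rinv_0_lt_compat; auto. lra. }
    rewrite LimInf_inv_n in C2. pose proof (Rbar_le_trans _ _ _ C C2). simpl in H. lra.
Qed.

Lemma walk_ext l f f' e r : (forall x, (x < l)%nat -> f x = f' x) -> walk l f e r -> walk l f' e r.
Proof.
  intros H W; induction W. apply wstop; auto.
  apply wstep; auto. rewrite <- H; auto. apply cont_lt; auto.
Qed.

Lemma cont_addw l s e : cont l (addw s e) = cont l e.
Proof. destruct e; reflexivity. Qed.
Lemma tgt_addw s e : tgt (addw s e) = tgt e.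
Proof. destruct e; reflexivity. Qed.
Lemma down_addw l s e : down l (addw s e) = addw s (down l e).
Proof. destruct e; reflexivity. Qed.
Lemma join_addw l s e r : cont l e = true -> join (addw s e) r = addw s (join e r).
Proof. destruct e; simpl; auto; try discriminate. intros; apply addw_assoc. Qed.

Lemma walk_addw l f e r s : walk l f e r -> walk l f (addw s e) (addw s r).
Proof.
  intros W. destruct W.
  - rewrite <- down_addw. apply wstop. rewrite cont_addw; auto.
  - rewrite <- (join_addw l) by auto. apply wstep. rewrite cont_addw; auto. rewrite tgt_addw; auto.
Qed.

Lemma walk_addw_inv l f e r s : walk l f (addw s e) r -> exists r0, walk l f e r0.
Proof.
  intros W. inversion W; subst.
  - eexists; apply wstop. rewrite <- (cont_addw l s); auto.
  - eexists; apply wstep. rewrite <- (cont_addw l s); auto. rewrite <- (tgt_addw s); eauto.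
Qed.

Lemma walk_labels l n f e r : walk l f e r -> labels_lt (l + n) e ->
  (forall x, (x < l)%nat -> labels_lt (l + n) (f x)) -> labels_lt n r.
Proof.
  intros W; induction W; intros Le Lf.
  - destruct e; simpl in *; auto; apply Nat.ltb_ge in H; lia.
  - assert (labels_lt n r) by (apply IHW; auto; apply Lf; apply cont_lt; auto).
    destruct e; simpl; auto. apply labels_addw; auto.
Qed.

Lemma sF_ext l f f' e j : (forall x, (x < l)%nat -> f x = f' x) -> sF l f e j = sF l f' e j.
Proof.
  intros H. induction j; simpl; auto. rewrite IHj. unfold step.
  destruct (cont l (sF l f' e j)) eqn:E; auto. destruct (cont_true _ _ E) as [k [Lk [T Tk]]].
  destruct (sF l f' e j); simpl in *; try discriminate; subst; auto.
Qed.

Lemma tr_RES l f i : finite_seq l f i -> exists K,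
  (forall j, (j < K)%nat -> cont l (sF l f (f (l + i)%nat) j) = true) /\
  cont l (sF l f (f (l + i)%nat) K) = false /\ tr l f i = RES l f (f (l + i)%nat) K.
Proof.
  intros Hf. pose proof (tr_fin _ _ _ Hf) as W. destruct (walk_sF _ _ _ _ W) as [K0 [_ HK]].
  destruct (least_nat (fun K => cont l (sF l f (f (l + i)%nat) K) = false) K0 HK) as [K [H0 Hmin]].
  assert (Hc : forall j, (j < K)%nat -> cont l (sF l f (f (l + i)%nat) j) = true).
  { intros j Hj. destruct (cont l (sF l f (f (l + i)%nat) j)) eqn:E; auto. exfalso; eapply Hmin; eauto. }
  exists K. repeat split; auto. eapply walk_det; eauto. apply walk_res; auto.
Qed.

Definition nd l f i t : nat := match t with O => (l + i)%nat | S t' => tgt (sF l f (f (l + i)%nat) t') end.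

Lemma nd_entry l f i t : (forall t', (t' < t)%nat -> cont l (sF l f (f (l + i)%nat) t') = true) ->
  sF l f (f (l + i)%nat) t = f (nd l f i t).
Proof.
  destruct t; intros H; simpl; auto. apply step_cont. apply H; lia.
Qed.

Lemma nd_lt l f i t : (1 <= t)%nat -> (forall t', (t' < t)%nat -> cont l (sF l f (f (l + i)%nat) t') = true) ->
  (nd l f i t < l)%nat.
Proof. destruct t; intros A H. lia. simpl. apply cont_lt. apply H; lia. Qed.

Lemma RES_Pt l f e K k : RES l f e K = Pt k -> cont l (sF l f e K) = false ->
  (forall j, (j < K)%nat -> cont l (sF l f e j) = true) ->
  sF l f e K = Pt (l + k)%nat /\ forall j, (j < K)%nat -> sF l f e j = Pt (tgt (sF l f e j)).
Proof.
  unfold RES. intros H C Hc. destruct (sF l f e K) eqn:E; try discriminate.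
  destruct (existsb (fun j => isW (sF l f e j)) (seq 0 K)) eqn:EB; try discriminate.
  inversion H; subst. simpl in C. apply Nat.ltb_ge in C. split. f_equal; lia.
  intros j Hj. pose proof (existsb_false_seq _ _ _ EB j ltac:(lia)) as W. simpl in W.
  specialize (Hc j Hj). destruct (sF l f e j); simpl in *; try discriminate; auto.
Qed.

Lemma RES_tg l f e K k : tg k (RES l f e K) -> cont l (sF l f e K) = false ->
  tg (l + k)%nat (sF l f e K).
Proof.
  unfold RES. intros H C. destruct (sF l f e K) eqn:E; simpl in C; try apply Nat.ltb_ge in C;
    try (destruct H as [H|[r H]]; discriminate).
  - destruct (existsb _ _); destruct H as [H|[r H]]; inversion H; subst; left; f_equal; lia.
  - destruct H as [H|[r' H]]; inversion H; subst; right; exists r; f_equal; lia.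
Qed.

Lemma tr_labels l m n f i : Arr (l + m) (l + n) f -> (i < m)%nat -> labels_lt n (tr l f i).
Proof.
  intros [Lf Rf] Hi. destruct (classic (finite_seq l f i)) as [Hf|Hf].
  - eapply walk_labels. apply tr_fin; auto. apply Lf; lia. intros; apply Lf; lia.
  - rewrite tr_infinite by auto. destruct (Rbar_le_dec _ _) as [Q|Q]; simpl; auto.
Qed.

Lemma tr_Pt_finite l f i k : tr l f i = Pt k -> finite_seq l f i.
Proof.
  intros H. apply NNPP. intros C. rewrite tr_infinite in H by auto. destruct (Rbar_le_dec _ _) as [Q|Q]; discriminate.
Qed.

Lemma tr_tg_finite l f i k : tg k (tr l f i) -> finite_seq l f i.
Proof.
  intros H. apply NNPP. intros C. rewrite tr_infinite in H by auto.
  destruct (Rbar_le_dec _ _) as [Q|Q]; destruct H as [H|[r H]]; discriminate.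
Qed.

Lemma tr_Arr l m n f : Arr (l + m) (l + n) f -> Arr m n (tr l f).
Proof.
  intros HA. split. intros; eapply tr_labels; eauto.
  destruct HA as [Lf Rf].
  intros i k Hi Hk j Hj Hne.
  enough (~ tg k (tr l f j)) by (split; [intros E|intros r E]; apply H; [left|right; exists r]; auto).
  intros Htj.
  destruct (tr_RES _ _ _ (tr_Pt_finite _ _ _ _ Hk)) as [K [Hc [HK Ei]]].
  destruct (tr_RES _ _ _ (tr_tg_finite _ _ _ _ Htj)) as [K' [Hc' [HK' Ej]]].
  rewrite Ei in Hk. rewrite Ej in Htj.
  destruct (RES_Pt _ _ _ _ _ Hk HK Hc) as [Last Pts].
  pose proof (RES_tg _ _ _ _ _ Htj HK') as Last'.
  set (x := nd l f i). set (y := nd l f j).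
  assert (Ex : forall t, (t <= K)%nat -> sF l f (f (l + i)%nat) t = f (x t)).
  { intros t Ht. apply nd_entry. intros; apply Hc; lia. }
  assert (Ey : forall t, (t <= K')%nat -> sF l f (f (l + j)%nat) t = f (y t)).
  { intros t Ht. apply nd_entry. intros; apply Hc'; lia. }
  assert (Xr : forall t, (t <= K)%nat -> (x t < l + m)%nat).
  { intros [|t] Ht. simpl; lia. assert (nd l f i (S t) < l)%nat by (apply nd_lt; [lia|intros; apply Hc; lia]). unfold x; lia. }
  assert (Yr : forall t, (t <= K')%nat -> (y t < l + m)%nat).
  { intros [|t] Ht. simpl; lia. assert (nd l f j (S t) < l)%nat by (apply nd_lt; [lia|intros; apply Hc'; lia]). unfold y; lia. }
  assert (Claim : forall d, (d <= K)%nat -> (d <= K')%nat -> x (K - d)%nat = y (K' - d)%nat).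
  { induction d; intros H1 H2.
    - rewrite !Nat.sub_0_r. destruct (Nat.eq_dec (x K) (y K')) as [E|E]; auto. exfalso.
      eapply (realiz_tg (l + m) f (x K) (l + k)%nat (y K') Rf). apply Xr; lia.
      rewrite <- Ex; auto. apply Yr; lia. auto. rewrite <- Ey; auto.
    - specialize (IHd ltac:(lia) ltac:(lia)).
      destruct (Nat.eq_dec (x (K - S d)%nat) (y (K' - S d)%nat)) as [E|E]; auto. exfalso.
      assert (Px : f (x (K - S d)%nat) = Pt (x (K - d)%nat)).
      { rewrite <- Ex by lia. rewrite Pts by lia. f_equal. unfold x. replace (K - d)%nat with (S (K - S d)) by lia. reflexivity. }
      assert (Ty : tg (y (K' - d)%nat) (f (y (K' - S d)%nat))).
      { rewrite <- Ey by lia. replace (y (K' - d)%nat) with (tgt (sF l f (f (l + j)%nat) (K' - S d))).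
        apply (cont_tg l). apply Hc'; lia. unfold y. replace (K' - d)%nat with (S (K' - S d)) by lia. reflexivity. }
      rewrite <- IHd in Ty.
      eapply (realiz_tg (l + m) f (x (K - S d)%nat) (x (K - d)%nat) (y (K' - S d)%nat) Rf); eauto.
      apply Xr; lia. apply Yr; lia. }
  destruct (le_lt_dec K K') as [LK|LK].
  - specialize (Claim K ltac:(lia) LK). rewrite Nat.sub_diag in Claim. simpl in Claim.
    destruct (K' - K)%nat eqn:D.
    + simpl in Claim. lia.
    + assert (nd l f j (S n0) < l)%nat by (apply nd_lt; [lia|intros; apply Hc'; lia]).
      unfold y in Claim. lia.
  - specialize (Claim K' ltac:(lia) ltac:(lia)). rewrite Nat.sub_diag in Claim. simpl in Claim.
    destruct (K - K')%nat eqn:D. lia.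
    assert (nd l f i (S n0) < l)%nat by (apply nd_lt; [lia|intros; apply Hc; lia]).
    unfold x in Claim. lia.
Qed.

Lemma wd_ok : well_defined_ops.
Proof.
  split; [apply id_Arr|split; [intros; eapply comp_Arr; eauto|split; [intros; apply sum_Arr; auto|split]]].
  apply sym_Arr. intros; eapply tr_Arr; eauto.
Qed.

Lemma down_0 e : down 0 e = e.
Proof. destruct e; simpl; auto; rewrite Nat.sub_0_r; auto. Qed.

Lemma cont_0 e : cont 0 e = false.
Proof. destruct e; reflexivity. Qed.

Lemma vanish1 m n f : Arr m n f -> eqA m (tr 0 f) f.
Proof.
  intros _ i Hi. apply tr_walk. simpl. rewrite <- (down_0 (f i)) at 2. apply wstop. apply cont_0.
Qed.

Lemma yank m : eqA m (tr m (sym m m)) idA.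
Proof.
  intros i Hi. apply tr_walk. unfold idA.
  assert (E1 : sym m m (m + i)%nat = Pt i).
  { unfold sym. destruct (Nat.ltb_spec (m + i) m); try lia. f_equal; lia. }
  rewrite E1. replace (Pt i) with (join (Pt i) (down m (Pt (m + i)%nat))) at 2.
  apply wstep. simpl. apply Nat.ltb_lt; auto.
  simpl. replace (sym m m i) with (Pt (m + i)%nat). apply wstop. simpl. apply Nat.ltb_ge; lia.
  unfold sym. destruct (Nat.ltb_spec i m); try lia. auto.
  simpl. f_equal; lia.
Qed.

Lemma down_shift l x : down l (shiftT l x) = x.
Proof. destruct x; simpl; auto; f_equal; lia. Qed.

Lemma cont_shift l x : cont l (shiftT l x) = false.
Proof. destruct x; simpl; auto; apply Nat.ltb_ge; lia. Qed.

Lemma PS_ext l f f' e e' : (forall t, sF l f e t = sF l f' e' t) -> forall N, PS l f e N = PS l f' e' N.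
Proof. intros H N. unfold PS. apply rsum_ext. intros; rewrite H; auto. Qed.

Lemma not_finite_cont l f i : ~ finite_seq l f i -> forall t, cont l (sF l f (f (l + i)%nat) t) = true.
Proof.
  intros H t. destruct (cont l _) eqn:E; auto. exfalso. apply H. apply finite_iff. eauto.
Qed.

Lemma superpose l m n m' n' f g : Arr (l + m) (l + n) f -> Arr m' n' g ->
  eqA (m + m') (sum m n (tr l f) g) (tr l (sum (l + m) (l + n) f g)).
Proof.
  intros Hf Hg i Hi. set (S := sum (l + m) (l + n) f g).
  assert (HS : Arr (l + (m + m')) (l + (n + n')) S).
  { rewrite !Nat.add_assoc. apply sum_Arr; auto. }
  assert (Sx : forall x, (x < l + m)%nat -> S x = f x).
  { intros x Hx. unfold S, sum. destruct (Nat.ltb_spec x (l + m)); auto; lia. }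
  unfold sum at 1. destruct (Nat.ltb_spec i m) as [Q|Q].
  - assert (E0 : S (l + i)%nat = f (l + i)%nat) by (apply Sx; lia).
    assert (Ext : forall x, (x < l)%nat -> f x = S x) by (intros; rewrite Sx; auto; lia).
    destruct (classic (finite_seq l f i)) as [Fin|NF].
    + symmetry. apply tr_walk. rewrite E0. eapply walk_ext; eauto. apply tr_fin; auto.
    + pose proof (not_finite_cont _ _ _ NF) as INF.
      assert (EsF : forall t, sF l S (S (l + i)%nat) t = sF l f (f (l + i)%nat) t).
      { intros t. rewrite E0. symmetry. apply sF_ext; auto. }
      assert (INF' : forall t, cont l (sF l S (S (l + i)%nat) t) = true) by (intros; rewrite EsF; auto).
      destruct (GI l m n f i Hf Q INF) as [_ [G1 G2]].
      destruct (GI l (m + m') (n + n') S i HS Hi INF') as [_ [G1' G2']].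
      pose proof (PS_ext _ _ _ _ _ EsF) as EP.
      destruct (classic (BB (PS l f (f (l + i)%nat)))) as [B|B].
      * rewrite G1, G1'; auto. destruct B as [b Hb]; exists b; intros N; rewrite EP; auto.
      * rewrite G2, G2'; auto. intros [b Hb]; apply B; exists b; intros N; rewrite <- EP; auto.
  - symmetry. apply tr_walk. unfold S, sum.
    destruct (Nat.ltb_spec (l + i) (l + m)); try lia.
    replace (l + i - (l + m))%nat with (i - m)%nat by lia.
    rewrite <- (down_shift l (shiftT n (g (i - m)%nat))). rewrite shiftT_shiftT.
    apply wstop. rewrite <- shiftT_shiftT. apply cont_shift.
Qed.

Lemma ap_H_cont l h e : cont l e = true -> ap e (sum l l idA h) = e.
Proof.
  intros C. destruct (cont_true _ _ C) as [k [Lk [T Tk]]].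
  destruct e; simpl in *; try discriminate; subst; unfold sum, idA;
    destruct (Nat.ltb_spec k l); try lia; auto.
Qed.

Lemma walk_post l n f h e r : walk l f e r -> labels_lt (l + n) e ->
  (forall x, (x < l)%nat -> labels_lt (l + n) (f x)) ->
  walk l (fun x => ap (f x) (sum l l idA h)) (ap e (sum l l idA h)) (ap r h).
Proof.
  intros W; induction W; intros Le Lf.
  - destruct e as [k|s k| |]; simpl in *; try (apply (wstop l _ Ex); reflexivity);
      try (apply (wstop l _ Fa); reflexivity);
      apply Nat.ltb_ge in H; unfold sum; destruct (Nat.ltb_spec k l); try lia.
    + rewrite <- (down_shift l (h (k - l)%nat)) at 2. apply wstop. apply cont_shift.
    + rewrite <- (down_shift l (h (k - l)%nat)) at 2. rewrite <- down_addw. apply wstop.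
      rewrite cont_addw. apply cont_shift.
  - rewrite ap_H_cont by auto.
    replace (ap (join e r) h) with (join e (ap r h)).
    apply wstep; auto. apply IHW. apply Lf. apply cont_lt; auto. intros; apply Lf; auto.
    destruct e; simpl in *; try discriminate; auto. rewrite ap_addw; auto.
Qed.

Definition pre (o : option R) e : Tt nat := match o with None => e | Some r => addw r e end.

Lemma walk_pre l f o e r : walk l f e r -> walk l f (pre o e) (pre o r).
Proof. destruct o; simpl; auto. apply walk_addw. Qed.

Lemma step_pre l f o e : cont l e = true -> step l f (pre o e) = step l f e.
Proof.
  intros C. destruct o; simpl; auto. rewrite !step_cont; auto. rewrite tgt_addw; auto. rewrite cont_addw; auto.
Qed.

Lemma cont_pre l o e : cont l (pre o e) = cont l e.
Proof. destruct o; simpl; auto. apply cont_addw. Qed.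

Lemma sF_same l f F e : (forall t, cont l (sF l f e t) = true) ->
  (forall x, (x < l)%nat -> cont l (f x) = true -> F x = f x) -> forall t, sF l F e t = sF l f e t.
Proof.
  intros INF H. induction t; simpl; auto. rewrite IHt. rewrite !step_cont by auto.
  apply H. apply cont_lt; auto. rewrite <- (step_cont l f) by auto. apply (INF (S t)).
Qed.

Lemma PS_pre_diff l f F o e : cont l e = true -> (forall t, sF l F e (S t) = sF l f e (S t)) ->
  forall N, Rabs (PS l F (pre o e) N - PS l f e N) <= Rabs (weight (pre o e) - weight e).
Proof.
  intros C H. assert (D : forall N, PS l F (pre o e) (S N) - PS l f e (S N) = weight (pre o e) - weight e).
  { induction N. unfold PS; simpl. ring.
    rewrite !PS_S. assert (sF l F (pre o e) (S N) = sF l f e (S N)).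
    { rewrite sF_S, step_pre by auto. rewrite <- sF_S. auto. }
    rewrite H0. rewrite <- IHN. rewrite !PS_S. ring. }
  intros [|N]. unfold PS; simpl. rewrite Rminus_diag, Rabs_R0. apply Rabs_pos.
  rewrite D. apply Rle_refl.
Qed.

Lemma natur_core l m n m' n' f h F i j o :
  Arr (l + m) (l + n) f -> Arr n n' h -> Arr (l + m') (l + n') F ->
  (forall x, (x < l)%nat -> F x = ap (f x) (sum l l idA h)) -> (i < m')%nat -> (j < m)%nat ->
  F (l + i)%nat = pre o (ap (f (l + j)%nat) (sum l l idA h)) ->
  tr l F i = pre o (ap (tr l f j) h).
Proof.
  intros Hf Hh HF Fx Hi Hj Fi. set (H := sum l l idA h) in *.
  destruct (classic (finite_seq l f j)) as [Fin|NF].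
  - apply tr_walk. rewrite Fi. apply walk_pre. eapply walk_ext.
    intros x Hx. symmetry. apply Fx; auto.
    apply walk_post with (n := n). apply tr_fin; auto.
    destruct Hf as [Lf _]. apply Lf; lia. intros x Hx; destruct Hf as [Lf _]; apply Lf; lia.
  - pose proof (not_finite_cont _ _ _ NF) as INF.
    set (e := f (l + j)%nat) in *.
    assert (Ce : cont l e = true) by apply (INF O).
    unfold H in Fi. rewrite ap_H_cont in Fi by auto. fold H in Fi.
    assert (Same : forall t, sF l F e t = sF l f e t).
    { apply sF_same; auto. intros x Hx Cx. rewrite Fx by auto. apply ap_H_cont; auto. }
    assert (Same' : forall t, sF l F (pre o e) (S t) = sF l f e (S t)).
    { intros t. rewrite sF_S, step_pre by auto. rewrite <- sF_S. auto. }
    assert (INF' : forall t, cont l (sF l F (F (l + i)%nat) t) = true).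
    { intros [|t]; rewrite Fi. simpl. rewrite cont_pre; auto. rewrite Same'. apply INF. }
    destruct (GI l m n f j Hf Hj INF) as [_ [G1 G2]].
    destruct (GI l m' n' F i HF Hi INF') as [_ [G1' G2']].
    rewrite Fi in G1', G2'.
    assert (Hb : BB (PS l F (pre o e)) <-> BB (PS l f e)).
    { apply BB_bounded_diff with (C := Rabs (weight (pre o e) - weight e)).
      apply PS_pre_diff; auto. }
    destruct (classic (BB (PS l f e))) as [B|B].
    + rewrite G1, G1' by first [assumption | apply Hb; assumption]. destruct o; reflexivity.
    + rewrite G2, G2' by first [assumption | rewrite Hb; assumption]. destruct o; reflexivity.
Qed.

Lemma naturality l m n m' n' f g h : Arr m' m g -> Arr (l + m) (l + n) f -> Arr n n' h ->
  eqA m' (tr l (comp (comp (sum l l idA g) f) (sum l l idA h))) (comp (comp g (tr l f)) h).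
Proof.
  intros Hg Hf Hh i Hi.
  set (F := comp (comp (sum l l idA g) f) (sum l l idA h)).
  assert (HF : Arr (l + m') (l + n') F).
  { unfold F. eapply comp_Arr. eapply comp_Arr. apply sum_Arr. apply id_Arr. eauto. eauto.
    apply sum_Arr. apply id_Arr. auto. }
  assert (Sg1 : forall x, (x < l)%nat -> sum l l idA g x = Pt x).
  { intros x Hx. unfold sum. destruct (Nat.ltb_spec x l); try lia. auto. }
  assert (Sg2 : sum l l idA g (l + i)%nat = shiftT l (g i)).
  { unfold sum. destruct (Nat.ltb_spec (l + i) l); try lia. f_equal. f_equal. lia. }
  assert (Fx : forall x, (x < l)%nat -> F x = ap (f x) (sum l l idA h)).
  { intros x Hx. unfold F. rewrite !comp_ap, Sg1 by auto. reflexivity. }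
  assert (Fi : F (l + i)%nat = ap (ap (g i) (fun j => f (l + j)%nat)) (sum l l idA h)).
  { unfold F. rewrite !comp_ap, Sg2, ap_shift. reflexivity. }
  rewrite !comp_ap.
  destruct Hg as [Lg _]. specialize (Lg i Hi).
  destruct (g i) as [j|r j| |] eqn:Eg; simpl in Fi |- *.
  - apply (natur_core l m n m' n' f h F i j None); auto.
  - rewrite ap_addw. apply (natur_core l m n m' n' f h F i j (Some r)); auto.
    rewrite Fi. simpl. apply ap_addw.
  - apply tr_walk. rewrite Fi. apply (wstop l F Ex). reflexivity.
  - apply tr_walk. rewrite Fi. apply (wstop l F Fa). reflexivity.
Qed.

Definition oe e : option R := match e with Wt s _ => Some s | _ => None end.
Definition oW (o : option R) : R := match o with None => 0 | Some t => t end.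
Definition isPW e : Prop := match e with Pt _ | Wt _ _ => True | _ => False end.

Lemma cont_isPW l e : cont l e = true -> isPW e.
Proof. destruct e; simpl; auto; discriminate. Qed.

Lemma ap_pre e G : isPW e -> ap e G = pre (oe e) (G (tgt e)).
Proof. destruct e; simpl; tauto. Qed.

Lemma join_pre e r : isPW e -> join e r = pre (oe e) r.
Proof. destruct e; simpl; tauto. Qed.

Lemma weight_oe e : weight e = oW (oe e).
Proof. destruct e; reflexivity. Qed.

Lemma weight_pre o x : isPW x -> weight (pre o x) = oW o + weight x.
Proof. destruct o, x; simpl; try tauto; intros; ring. Qed.

Lemma pre_Ex o : pre o Ex = Ex.
Proof. destruct o; reflexivity. Qed.
Lemma pre_Fa o : pre o Fa = Fa.
Proof. destruct o; reflexivity. Qed.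

Lemma tgt_pre o x : tgt (pre o x) = tgt x.
Proof. destruct o; simpl; auto. apply tgt_addw. Qed.

Lemma isPW_pre o x : isPW (pre o x) <-> isPW x.
Proof. destruct o, x; simpl; tauto. Qed.

Lemma walk_pre_inv l f o e r : walk l f (pre o e) r -> exists r0, walk l f e r0 /\ r = pre o r0.
Proof.
  intros W. destruct o as [t|]; simpl in *.
  - destruct (walk_addw_inv _ _ _ _ _ W) as [r0 W0]. exists r0. split; auto.
    eapply walk_det; eauto. apply walk_addw; auto.
  - eauto.
Qed.


Lemma K_lt l l' k y : (y < l')%nat -> sum l' l k idA y = k y.
Proof. intros H. unfold sum. destruct (Nat.ltb_spec y l'); auto; lia. Qed.
Lemma K_ge l l' k y : (l' <= y)%nat -> sum l' l k idA y = Pt (l + (y - l'))%nat.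
Proof. intros H. unfold sum. destruct (Nat.ltb_spec y l'); try lia. reflexivity. Qed.

Lemma slide_c l l' f k c r : labels_lt l c ->
  walk l (fun x => ap (f x) (sum l' l k idA)) (ap (ap c f) (sum l' l k idA)) r ->
  walk l (fun x => ap (f x) (sum l' l k idA)) c r.
Proof.
  set (A := fun x => ap (f x) (sum l' l k idA)). intros Lc W.
  destruct c as [z|t z| |]; simpl in Lc.
  - replace r with (join (Pt z) r) by reflexivity. apply wstep. simpl; apply Nat.ltb_lt; auto. exact W.
  - simpl in W. rewrite ap_addw in W. change (walk l A (pre (Some t) (A z)) r) in W.
    destruct (walk_pre_inv _ _ _ _ _ W) as [r0 [W0 E]]. subst r.
    replace (pre (Some t) r0) with (join (Wt t z) r0) by reflexivity. apply wstep. simpl; apply Nat.ltb_lt; auto. exact W0.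
  - simpl in W. inversion W; subst. simpl. apply (wstop l A Ex); reflexivity. simpl in H; discriminate.
  - simpl in W. inversion W; subst. simpl. apply (wstop l A Fa); reflexivity. simpl in H; discriminate.
Qed.

Lemma slide_fwd l l' m n f k e r : Arr (l + m) (l' + n) f -> Arr l' l k ->
  walk l' (fun y => ap (sum l' l k idA y) f) e r -> labels_lt (l' + n) e ->
  walk l (fun x => ap (f x) (sum l' l k idA)) (ap e (sum l' l k idA)) r.
Proof.
  intros [Lf _] [Lk _] W. induction W; intros Le.
  - destruct e as [y|s y| |]; simpl in H, Le |- *; try (apply (wstop l _ Ex); reflexivity);
      try (apply (wstop l _ Fa); reflexivity); apply Nat.ltb_ge in H; rewrite K_ge by lia.
    + replace (Pt (y - l')%nat) with (down l (Pt (l + (y - l'))%nat)) by (simpl; f_equal; lia).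
      apply wstop. simpl. apply Nat.ltb_ge; lia.
    + replace (Wt s (y - l')%nat) with (down l (Wt s (l + (y - l'))%nat)) by (simpl; f_equal; lia).
      apply wstop. simpl. apply Nat.ltb_ge; lia.
  - pose proof (cont_lt _ _ H) as Hy. pose proof (cont_isPW _ _ H) as P.
    rewrite ap_pre, join_pre by auto. rewrite K_lt by auto. apply walk_pre.
    rewrite K_lt in W, IHW by auto.
    apply slide_c. apply Lk; auto. apply IHW.
    apply labels_ap with (l := l). apply Lk; auto. intros; apply Lf; lia.
Qed.

Lemma slide_bwd l l' m n f k e r : Arr (l + m) (l' + n) f -> Arr l' l k -> labels_lt (l' + n) e ->
  walk l (fun x => ap (f x) (sum l' l k idA)) (ap e (sum l' l k idA)) r ->
  exists r', walk l' (fun y => ap (sum l' l k idA y) f) e r'.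
Proof.
  intros [Lf Rf] [Lk Rk] Le W. set (K := sum l' l k idA) in *. set (A := fun x => ap (f x) K) in *.
  set (B := fun y => ap (K y) f).
  remember (ap e K) as e' eqn:Ee. revert e Le Ee. induction W; intros e0 Le Ee.
  - destruct (cont l' e0) eqn:C0.
    + pose proof (cont_lt _ _ C0) as Hy. pose proof (cont_isPW _ _ C0) as P.
      rewrite ap_pre in Ee by auto. unfold K in Ee. rewrite K_lt in Ee by auto. fold K in Ee.
      subst e. rewrite cont_pre in H.
      specialize (Lk _ Hy). destruct (k (tgt e0)) as [z|t z| |] eqn:Ek; simpl in H, Lk;
        try (apply Nat.ltb_ge in H; lia).
      * eexists. apply wstep; auto. unfold B, K. rewrite K_lt, Ek by auto. simpl. apply (wstop l' _ Ex). reflexivity.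
      * eexists. apply wstep; auto. unfold B, K. rewrite K_lt, Ek by auto. simpl. apply (wstop l' _ Fa). reflexivity.
    + eexists; apply wstop; auto.
  - destruct (cont l' e0) eqn:C0.
    + pose proof (cont_lt _ _ C0) as Hy. pose proof (cont_isPW _ _ C0) as P.
      rewrite ap_pre in Ee by auto. unfold K in Ee. rewrite K_lt in Ee by auto. fold K in Ee.
      subst e. rewrite cont_pre in H. rewrite tgt_pre in W, IHW.
      specialize (Lk _ Hy). pose proof (cont_lt _ _ H) as Hz.
      destruct (IHW (f (tgt (k (tgt e0))))) as [r0 W0]. apply Lf; lia. reflexivity.
      exists (join e0 (pre (oe (k (tgt e0))) r0)). apply wstep; auto.
      unfold B, K. rewrite K_lt by auto. fold K. rewrite ap_pre by (apply (cont_isPW l); auto).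
      apply walk_pre. exact W0.
    + exfalso. destruct e0 as [y|s y| |]; simpl in C0, Ee, Le; subst e; simpl in H; try discriminate.
      * apply Nat.ltb_ge in C0. unfold K in H. rewrite K_ge in H by lia. simpl in H. apply Nat.ltb_lt in H. lia.
      * apply Nat.ltb_ge in C0. unfold K in H. rewrite K_ge in H by lia. simpl in H. apply Nat.ltb_lt in H. lia.
Qed.

Lemma sliding l l' m n f k : Arr (l + m) (l' + n) f -> Arr l' l k ->
  eqA m (tr l (comp f (sum l' l k idA))) (tr l' (comp (sum l' l k idA) f)).
Proof.
  intros Hf Hk i Hi. set (K := sum l' l k idA).
  assert (HA : Arr (l + m) (l + n) (comp f K)).
  { eapply comp_Arr. eauto. apply sum_Arr. auto. apply id_Arr. }
  assert (HB : Arr (l' + m) (l' + n) (comp K f)).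
  { eapply comp_Arr. apply sum_Arr. eauto. apply id_Arr. auto. }
  assert (EA : comp f K = fun x => ap (f x) K) by (apply functional_extensionality; intros; apply comp_ap).
  assert (EB : comp K f = fun y => ap (K y) f) by (apply functional_extensionality; intros; apply comp_ap).
  rewrite EA in HA |- *. rewrite EB in HB |- *.
  set (A := fun x => ap (f x) K) in *. set (B := fun y => ap (K y) f) in *.
  assert (Bi : B (l' + i)%nat = f (l + i)%nat).
  { unfold B, K. rewrite K_ge by lia. simpl. f_equal. lia. }
  assert (Ai : A (l + i)%nat = ap (f (l + i)%nat) K) by reflexivity.
  assert (Lfi : labels_lt (l' + n) (f (l + i)%nat)) by (destruct Hf as [Lf _]; apply Lf; lia).
  destruct (classic (finite_seq l' B i)) as [Fin|NFB].
  - pose proof (tr_fin _ _ _ Fin) as W. rewrite Bi in W.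
    apply tr_walk. rewrite Ai. eapply slide_fwd; eauto.
  - assert (NFA : ~ finite_seq l A i).
    { intros FA. pose proof (tr_fin _ _ _ FA) as W. rewrite Ai in W.
      destruct (slide_bwd _ _ _ _ _ _ _ _ Hf Hk Lfi W) as [r' W'].
      apply NFB. apply finite_iff. rewrite Bi. destruct (walk_sF _ _ _ _ W') as [K0 [_ H0]]. eauto. }
    pose proof (not_finite_cont _ _ _ NFA) as INFA. pose proof (not_finite_cont _ _ _ NFB) as INFB.
    destruct (GI l m n A i HA Hi INFA) as [_ [G1 G2]].
    destruct (GI l' m n B i HB Hi INFB) as [_ [G1' G2']].
    assert (Inv : forall N, exists phi, (phi = f (l + i)%nat \/ exists z, (z < l)%nat /\ phi = f z) /\
      sF l A (A (l + i)%nat) N = ap phi K /\ (exists o, sF l' B (B (l' + i)%nat) N = pre o phi) /\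
      PS l' B (B (l' + i)%nat) (S N) = PS l A (A (l + i)%nat) N + weight phi).
    { induction N.
      - exists (f (l + i)%nat). split; auto. split; auto. split. exists None. simpl. auto.
        rewrite PS_S. unfold PS; simpl. rewrite Bi. ring.
      - destruct IHN as [phi [Hphi [Ha [[o Hb] Hp]]]].
        pose proof (INFB N) as CB. rewrite Hb, cont_pre in CB.
        pose proof (cont_lt _ _ CB) as Hy. pose proof (cont_isPW _ _ CB) as Pphi.
        set (y := tgt phi) in *.
        assert (Ha' : sF l A (A (l + i)%nat) N = pre (oe phi) (k y)).
        { rewrite Ha, ap_pre by auto. unfold K. rewrite K_lt by auto. auto. }
        pose proof (INFA N) as CA. rewrite Ha', cont_pre in CA.
        pose proof (cont_lt _ _ CA) as Hz. pose proof (cont_isPW _ _ CA) as Pky.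
        set (z := tgt (k y)) in *.
        assert (Ha2 : sF l A (A (l + i)%nat) (S N) = ap (f z) K).
        { simpl. rewrite step_cont. rewrite Ha', tgt_pre. auto. rewrite Ha', cont_pre; auto. }
        assert (Hb2 : sF l' B (B (l' + i)%nat) (S N) = pre (oe (k y)) (f z)).
        { simpl. rewrite step_cont. rewrite Hb, tgt_pre. fold y. unfold B, K. rewrite K_lt by auto.
          rewrite ap_pre by auto. auto. rewrite Hb, cont_pre; auto. }
        exists (f z). split. right; eauto. split; auto. split. eauto.
        pose proof (INFB (S N)) as CB2. rewrite Hb2, cont_pre in CB2.
        rewrite PS_S, Hp, PS_S, Hb2, Ha'. rewrite !weight_pre by (auto; eapply cont_isPW; eauto).
        rewrite <- !weight_oe. ring. }
    destruct (finite_bound (fun z => weight (f z)) l) as [M HM].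
    assert (Hb : BB (PS l A (A (l + i)%nat)) <-> BB (PS l' B (B (l' + i)%nat))).
    { rewrite <- (BB_S (PS l' B (B (l' + i)%nat))).
      apply BB_bounded_diff with (C := Rmax (Rabs (weight (f (l + i)%nat))) M).
      intros N. destruct (Inv N) as [phi [Hphi [_ [_ Hp]]]]. rewrite Hp.
      replace (PS l A (A (l + i)%nat) N - (PS l A (A (l + i)%nat) N + weight phi)) with (- weight phi) by ring.
      rewrite Rabs_Ropp. destruct Hphi as [->|[z [Hz ->]]]. apply Rmax_l.
      eapply Rle_trans. apply (HM z Hz). apply Rmax_r. }
    destruct (classic (BB (PS l A (A (l + i)%nat)))) as [Bb|Bb].
    + rewrite G1, G1' by first [assumption | apply Hb; assumption]. auto.
    + rewrite G2, G2' by first [assumption | rewrite <- Hb; assumption]. auto.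
Qed.

Lemma cont_mono l L e : (l <= L)%nat -> cont l e = true -> cont L e = true.
Proof. destruct e; simpl; auto; intros H1 H2; apply Nat.ltb_lt; apply Nat.ltb_lt in H2; lia. Qed.

Lemma walk_mono l L f e R : (l <= L)%nat -> walk L f e R -> exists r, walk l f e r.
Proof.
  intros HL W. induction W.
  - eexists; apply wstop. destruct (cont l e) eqn:E; auto. rewrite (cont_mono l L) in H; auto.
  - destruct (cont l e) eqn:E.
    + destruct IHW as [r0 W0]. eexists; apply wstep; eauto.
    + eexists; apply wstop; auto.
Qed.

Lemma join_down l e r : join (down l e) r = join e r.
Proof. destruct e; reflexivity. Qed.

Lemma walk_join l f e r R : isPW e -> walk l f r R -> walk l f (join e r) (join e R).
Proof. intros P W. rewrite !join_pre by auto. apply walk_pre; auto. Qed.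

Lemma vanish_V1 l l' f e R : walk (l + l') f e R -> forall r, walk l f e r -> walk l' (tr l f) r R.
Proof.
  intros W. induction W; intros r0 Wr.
  - assert (C : cont l e = false).
    { destruct (cont l e) eqn:E; auto. rewrite (cont_mono l (l + l')) in H; auto; lia. }
    inversion Wr; subst; [|congruence].
    replace (down (l + l') e) with (down l' (down l e)).
    apply wstop. destruct e; simpl in *; auto; apply Nat.ltb_ge in H; apply Nat.ltb_ge; lia.
    destruct e; simpl; auto; f_equal; lia.
  - destruct (cont l e) eqn:C.
    + inversion Wr; subst; [congruence|]. apply walk_join. eapply cont_isPW; eauto. auto.
    + inversion Wr; subst; [|congruence].
      pose proof (cont_lt _ _ H) as Hx. pose proof (cont_isPW _ _ H) as P.
      assert (Hxl : (l <= tgt e)%nat).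
      { destruct e; simpl in *; try contradiction; apply Nat.ltb_ge in C; lia. }
      destruct (walk_mono l (l + l') f _ _ ltac:(lia) W) as [r1 W1].
      rewrite <- (join_down l). apply wstep.
      destruct e; simpl in *; try contradiction; apply Nat.ltb_lt; lia.
      assert (E : tr l f (tgt (down l e)) = r1).
      { apply tr_walk. replace (l + tgt (down l e))%nat with (tgt e). auto.
        destruct e; simpl in *; try contradiction; lia. }
      rewrite E. apply IHW. auto.
Qed.

Lemma sF_agree l L f e K : (l <= L)%nat -> (forall j, (j < K)%nat -> cont l (sF l f e j) = true) ->
  forall j, (j <= K)%nat -> sF L f e j = sF l f e j.
Proof.
  intros HL Hc. induction j; intros Hj; simpl; auto. rewrite IHj by lia.
  rewrite (step_cont l f) by (apply Hc; lia). rewrite (step_cont L f) by (apply (cont_mono l); auto; apply Hc; lia). auto.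
Qed.

Lemma rsum_off (g : nat -> R) a c : rsum g a c = rsum (fun j => g (a + j)%nat) 0 c.
Proof.
  revert a; induction c; intros a; simpl; auto. rewrite IHc, Nat.add_0_r. f_equal.
  rewrite rsum_shift. apply rsum_ext. intros j. f_equal. lia.
Qed.

Lemma PS_add l f e p c : PS l f e (p + c) = PS l f e p + PS l f (sF l f e p) c.
Proof. unfold PS. rewrite rsum_add. f_equal. simpl. rewrite rsum_off. apply rsum_ext. intros j. rewrite sF_add. auto. Qed.

Lemma BB_shift P p : BB (fun N => P (p + N)%nat) <-> BB P.
Proof.
  induction p. simpl. split; auto.
  rewrite <- IHp. rewrite <- (BB_S (fun N => P (p + N)%nat)).
  split; intros [B HB]; exists B; intros N; specialize (HB N); rewrite Nat.add_succ_r in *; simpl in *; auto.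
Qed.

Lemma RES_shape l f e K : cont l (sF l f e K) = false ->
  (isPW (sF l f e K) -> isPW (RES l f e K) /\ (tgt (RES l f e K) + l)%nat = tgt (sF l f e K)) /\
  (~ isPW (sF l f e K) -> RES l f e K = sF l f e K).
Proof.
  unfold RES. intros C. destruct (sF l f e K) eqn:E; simpl in *; try tauto;
    try (apply Nat.ltb_ge in C; split; [intros _|tauto]).
  - destruct (existsb _ _); simpl; split; auto; lia.
  - simpl; split; auto; lia.
Qed.

Lemma RES_weight l f e K : isPW (RES l f e K) -> weight (RES l f e K) = PS l f e (S K).
Proof.
  unfold RES. destruct (sF l f e K) eqn:E; simpl; try tauto.
  - destruct (existsb (fun j => isW (sF l f e j)) (seq 0 K)) eqn:EB; simpl; auto.
    intros _. unfold PS. rewrite rsum_snoc, rsum_zero, Nat.add_0_l, E. simpl. ring.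
    intros j Hj. apply weight_nW. eapply existsb_false_seq in EB; eauto.
Qed.

Lemma tr_PW_finite l f u : isPW (tr l f u) -> finite_seq l f u.
Proof.
  intros P. apply NNPP. intros C. rewrite tr_infinite in P by auto. destruct (Rbar_le_dec _ _); simpl in P; auto.
Qed.

Lemma cont_of_PW l e : isPW e -> (tgt e < l)%nat -> cont l e = true.
Proof. destruct e; simpl; try tauto; intros; apply Nat.ltb_lt; auto. Qed.

Lemma rsum_ext_range (g1 g2 : nat -> R) a c : (forall j, (a <= j < a + c)%nat -> g1 j = g2 j) -> rsum g1 a c = rsum g2 a c.
Proof. revert a; induction c; intros a H; simpl; auto. rewrite H by lia. rewrite IHc; auto. intros; apply H; lia. Qed.

Lemma BB_offset c P : BB (fun N => c + P N) <-> BB P.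
Proof. apply BB_bounded_diff with (C := Rabs c). intros N. replace (c + P N - P N) with c by ring. apply Rle_refl. Qed.

Lemma tr_ExFa l f i : ~ finite_seq l f i -> tr l f i = Ex \/ tr l f i = Fa.
Proof. intros H. rewrite tr_infinite by auto. destruct (Rbar_le_dec _ _); auto. Qed.

Lemma join_ExFa e r : r = Ex \/ r = Fa -> join e r = r.
Proof. intros [->| ->]; destruct e; reflexivity. Qed.

Lemma vanish2 l l' m n f : Arr (l + l' + m) (l + l' + n) f -> eqA m (tr (l + l') f) (tr l' (tr l f)).
Proof.
  intros Hf i Hi.
  assert (Hfl : Arr (l + (l' + m)) (l + (l' + n)) f) by (rewrite !Nat.add_assoc; auto).
  pose proof (tr_Arr _ _ _ _ Hfl) as Hg. set (g := tr l f) in *.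
  assert (E0 : f (l + (l' + i))%nat = f (l + l' + i)%nat) by (rewrite Nat.add_assoc; auto).
  set (e0 := f (l + l' + i)%nat) in *.
  assert (HlL : (l <= l + l')%nat) by lia.
  destruct (classic (finite_seq (l + l') f i)) as [Fin|NF].
  - pose proof (tr_fin _ _ _ Fin) as W. fold e0 in W.
    destruct (walk_mono l (l + l') f _ _ HlL W) as [r Wr].
    assert (Er : g (l' + i)%nat = r) by (apply tr_walk; rewrite E0; auto).
    symmetry. apply tr_walk. rewrite Er. eapply vanish_V1; eauto.
  - pose proof (not_finite_cont _ _ _ NF) as INFL. fold e0 in INFL.
    destruct (GI (l + l') m n f i Hf Hi INFL) as [[p0 [q [s HDP]]] [G1 G2]]. fold e0 in G1, G2, HDP.
    pose proof (tr_ExFa _ _ _ NF) as BigEF.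
    assert (Agree : forall u K, (forall j, (j < K)%nat -> cont l (sF l f (f (l + u)%nat) j) = true) ->
              forall j, (j <= K)%nat -> sF (l + l') f (f (l + u)%nat) j = sF l f (f (l + u)%nat) j).
    { intros u K Hc. apply sF_agree; auto. }
    destruct (classic (finite_seq l' g i)) as [FinO|NFO].
    + assert (Claim : forall o R, walk l' g o R -> forall u p, (u < l' + m)%nat -> o = g u ->
                sF (l + l') f e0 p = f (l + u)%nat -> R = tr (l + l') f i).
      { intros o R W. induction W as [o C|o R' C W IH]; intros u p Hu Eo Ep.
        - destruct (classic (finite_seq l f u)) as [Fu|NFu].
          + exfalso. destruct (tr_RES _ _ _ Fu) as [K [Hc [HK Eo']]]. fold g in Eo'.
            assert (Big : sF (l + l') f e0 (p + K) = sF l f (f (l + u)%nat) K).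
            { rewrite sF_add, Ep. apply (Agree u K); auto. }
            pose proof (INFL (p + K)%nat) as CL. rewrite Big in CL.
            destruct (RES_shape _ _ _ _ HK) as [S1 _].
            destruct (S1 (cont_isPW _ _ CL)) as [P1 T1].
            pose proof (cont_lt _ _ CL) as T2.
            rewrite Eo, Eo' in C. rewrite (cont_of_PW l' _ P1) in C. discriminate. lia.
          + pose proof (not_finite_cont _ _ _ NFu) as INFu.
            destruct (GI l (l' + m) (l' + n) f u Hfl Hu INFu) as [_ [g1 g2]].
            assert (AgreeI : forall t, sF (l + l') f (f (l + u)%nat) t = sF l f (f (l + u)%nat) t).
            { intros t. apply (Agree u t); auto. }
            assert (HB : BB (PS (l + l') f e0) <-> BB (PS l f (f (l + u)%nat))).
            { assert (Fe : (fun N => PS (l + l') f e0 (p + N)%nat) =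
                           (fun N => PS (l + l') f e0 p + PS l f (f (l + u)%nat) N)).
              { apply functional_extensionality. intros N. rewrite PS_add, Ep. f_equal.
                unfold PS. apply rsum_ext. intros; rewrite AgreeI; auto. }
              rewrite <- (BB_shift _ p). rewrite Fe. apply BB_offset. }
            rewrite Eo. destruct (classic (BB (PS l f (f (l + u)%nat)))) as [Bb|Bb].
            * unfold g. rewrite g1, G1 by (auto; apply HB; auto). reflexivity.
            * unfold g. rewrite g2, G2 by (auto; rewrite HB; auto). reflexivity.
        - pose proof (cont_isPW _ _ C) as Po.
          assert (Fu : finite_seq l f u) by (apply tr_PW_finite; fold g; rewrite <- Eo; auto).
          destruct (tr_RES _ _ _ Fu) as [K [Hc [HK Eo']]]. fold g in Eo'.
          destruct (RES_shape _ _ _ _ HK) as [S1 S2].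
          assert (Plast : isPW (sF l f (f (l + u)%nat) K)).
          { destruct (classic (isPW (sF l f (f (l + u)%nat) K))) as [X|X]; auto.
            rewrite Eo, Eo', S2 in Po; auto. }
          destruct (S1 Plast) as [_ T1]. rewrite <- Eo' , <- Eo in T1.
          assert (Big : sF (l + l') f e0 (p + K) = sF l f (f (l + u)%nat) K).
          { rewrite sF_add, Ep. apply (Agree u K); auto. }
          assert (Big2 : sF (l + l') f e0 (p + S K) = f (l + tgt o)%nat).
          { rewrite Nat.add_succ_r. simpl. rewrite Big. rewrite step_cont. f_equal. lia.
            rewrite <- Big. apply INFL. }
          assert (R'E : R' = tr (l + l') f i).
          { apply (IH (tgt o) (p + S K)%nat); auto. pose proof (cont_lt _ _ C). lia. }
          rewrite R'E. apply join_ExFa; auto. }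
      symmetry. apply (Claim (g (l' + i)%nat) (tr l' g i) (tr_fin _ _ _ FinO) (l' + i)%nat O). lia. auto.
      simpl. rewrite E0. auto.
    + pose proof (not_finite_cont _ _ _ NFO) as INFO.
      destruct (GI l' m n g i Hg Hi INFO) as [_ [h1 h2]].
      assert (Inv : forall N, exists u p, (N <= p)%nat /\ (u < l' + m)%nat /\
                sF l' g (g (l' + i)%nat) N = g u /\ sF (l + l') f e0 p = f (l + u)%nat /\
                PS l' g (g (l' + i)%nat) N = PS (l + l') f e0 p).
      { induction N.
        - exists (l' + i)%nat, O. repeat split; auto; lia.
        - destruct IHN as [u [p [Hp [Hu [Eo [Ep EP]]]]]].
          set (o := sF l' g (g (l' + i)%nat) N) in *.
          assert (C : cont l' o = true) by apply INFO.
          pose proof (cont_isPW _ _ C) as Po.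
          assert (Fu : finite_seq l f u) by (apply tr_PW_finite; fold g; rewrite <- Eo; auto).
          destruct (tr_RES _ _ _ Fu) as [K [Hc [HK Eo']]]. fold g in Eo'.
          destruct (RES_shape _ _ _ _ HK) as [S1 S2].
          assert (Plast : isPW (sF l f (f (l + u)%nat) K)).
          { destruct (classic (isPW (sF l f (f (l + u)%nat) K))) as [X|X]; auto.
            rewrite Eo, Eo', S2 in Po; auto. }
          destruct (S1 Plast) as [_ T1]. rewrite <- Eo' , <- Eo in T1.
          assert (Big : sF (l + l') f e0 (p + K) = sF l f (f (l + u)%nat) K).
          { rewrite sF_add, Ep. apply (Agree u K); auto. }
          assert (Big2 : sF (l + l') f e0 (p + S K) = f (l + tgt o)%nat).
          { rewrite Nat.add_succ_r. simpl. rewrite Big. rewrite step_cont. f_equal. lia.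
            rewrite <- Big. apply INFL. }
          exists (tgt o), (p + S K)%nat. split. lia. split. pose proof (cont_lt _ _ C). lia.
          split. simpl. fold o. rewrite step_cont; auto.
          split; auto.
          rewrite PS_S, EP. fold o. rewrite Eo, Eo', RES_weight by (rewrite <- Eo', <- Eo; auto).
          rewrite PS_add, Ep. f_equal. unfold PS. apply rsum_ext_range. intros j Hj.
          rewrite (Agree u K); auto. lia. }
      assert (HB : BB (PS (l + l') f e0) <-> BB (PS l' g (g (l' + i)%nat))).
      { apply (BB_cofinal _ _ p0 q s HDP). intros N. destruct (Inv N) as [u [p [Hp [_ [_ [_ EP]]]]]]. eauto. }
      destruct (classic (BB (PS (l + l') f e0))) as [Bb|Bb].
      * rewrite G1, h1 by (auto; apply HB; auto). auto.
      * rewrite G2, h2 by (auto; rewrite <- HB; auto). auto.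
Qed.


Theorem proposition4p3 : traced_symmetric_monoidal.
Proof.
  split; [apply wd_ok|split; [apply cat_ok|split; [apply monoidal_ok|split; [apply symmetry_ok|]]]].
  split; [exact naturality|split; [exact sliding|split; [exact vanish1|split; [exact vanish2|split; [exact superpose|exact yank]]]]].
Qed.
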